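(* For $j\in\{1,2\}$ and $(\alpha,\beta)\in\mathbb{R}^2\setminus\{(0,0)\}$ let $\overline y_j$ be the solution of $\ddot y+(j^4+2)y+\frac32y^3=0$, $y(0)=\alpha$, $\dot y(0)=\beta$, with energy $E_j=\frac{\beta^2}{2}+(j^4+2)\frac{\alpha^2}{2}+\frac38\alpha^4$. (i) The first vertical mode is torsionally stable, i.e. the trivial solution of the system $\ddot\xi_1+\big(7+\frac{27}{2}\overline y_1(t)^2\big)\xi_1=0$, $\ddot\xi_2+\big(10+9\overline y_1(t)^2\big)\xi_2=0$ is Lyapunov stable, provided that $\|\overline y_1\|_\infty\le\frac1{\sqrt3}$, equivalently $E_1\le\frac{13}{24}$. (ii) The second vertical mode is torsionally stable, i.e. the trivial solution of the system $\ddot\xi_1+\big(7+9\overline y_2(t)^2\big)\xi_1=0$, $\ddot\xi_2+\big(10+\frac{27}{2}\overline y_2(t)^2\big)\xi_2=0$ is Lyapunov stable, provided that $\|\overline y_2\|_\infty\le\sqrt{32/51}$, equivalently $E_2\le\frac{5024}{867}$.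
   Context: These Hill systems are the linearizations, in the torsional variables $(z_1,z_2)$, of the two-mode system $\ddot y_1+3y_1+\frac92y_1z_1^2+3y_1z_2^2+3y_1y_2^2+\frac32y_1^3+6z_1z_2y_2=0$, $\ddot y_2+18y_2+\frac92y_2z_2^2+3y_2z_1^2+3y_2y_1^2+\frac32y_2^3+6z_1z_2y_1=0$, $\ddot z_1+7z_1+\frac{27}{2}z_1y_1^2+9z_1y_2^2+9z_1z_2^2+\frac92z_1^3+18y_1y_2z_2=0$, $\ddot z_2+10z_2+\frac{27}{2}z_2y_2^2+9z_2y_1^2+9z_2z_1^2+\frac92z_2^3+18y_1y_2z_1=0$, around the vertical modes $(\overline y_1,0,0,0)$ and $(0,\overline y_2,0,0)$ respectively. Stability of the trivial solution means solutions with small initial data remain small for all $t\ge0$. *)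

(* Defs.v *)
From Stdlib Require Import Reals Lra.
From Coquelicot Require Import Coquelicot.
Open Scope R_scope.

Definition duffing_sol (c alpha beta : R) (y dy : R -> R) : Prop :=
  y 0 = alpha /\ dy 0 = beta /\
  forall t : R, is_derive y t (dy t) /\
                is_derive dy t (- (c * y t + 3 / 2 * y t ^ 3)).

Definition energy (j : nat) (alpha beta : R) : R :=
  beta ^ 2 / 2 + (INR j ^ 4 + 2) * alpha ^ 2 / 2 + 3 / 8 * alpha ^ 4.

Definition sup_norm_le (y : R -> R) (b : R) : Prop :=
  forall t : R, Rabs (y t) <= b.

Definition hill_sol (a : R -> R) (x dx : R -> R) : Prop :=
  forall t : R, is_derive x t (dx t) /\ is_derive dx t (- (a t * x t)).

(* Lyapunov stability (forward in time, initial time 0, Euclidean norm of the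
   state (xi1, xi1', xi2, xi2')) of the trivial solution of the decoupled
   system  xi1'' + a1(t) xi1 = 0,  xi2'' + a2(t) xi2 = 0. *)
Definition lyapunov_stable_hill2 (a1 a2 : R -> R) : Prop :=
  forall eps : R, 0 < eps ->
  exists delta : R, 0 < delta /\
    forall x1 dx1 x2 dx2 : R -> R,
      hill_sol a1 x1 dx1 -> hill_sol a2 x2 dx2 ->
      x1 0 ^ 2 + dx1 0 ^ 2 + x2 0 ^ 2 + dx2 0 ^ 2 < delta ^ 2 ->
      forall t : R, 0 <= t ->
        x1 t ^ 2 + dx1 t ^ 2 + x2 t ^ 2 + dx2 t ^ 2 < eps ^ 2.

(* Main.v *)
Require Import Defs.
From Stdlib Require Import Reals Lra Psatz Classical.
From Coquelicot Require Import Coquelicot.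
Open Scope R_scope.

Lemma is_derive_eq (f : R -> R) (x l l' : R) : is_derive f x l -> l = l' -> is_derive f x l'.
Proof. intros H ->; exact H. Qed.

Lemma der_comp (f g : R -> R) (x df dg : R) : is_derive f (g x) df -> is_derive g x dg ->
  is_derive (fun t => f (g t)) x (df * dg).
Proof.
  intros H1 H2. eapply is_derive_eq. apply (is_derive_comp f g x df dg H1 H2).
  rewrite Rmult_comm; reflexivity.
Qed.

Lemma der_cont (f : R -> R) (x l : R) : is_derive f x l -> continuity_pt f x.
Proof.
  intros H. apply continuity_pt_filterlim.
  apply (ex_derive_continuous f x). exists l; exact H.
Qed.

Lemma mvt (f df : R -> R) a b : a <= b ->
  (forall t, a <= t <= b -> is_derive f t (df t)) ->
  exists c, a <= c <= b /\ f b - f a = df c * (b - a).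
Proof.
  intros Hab H.
  destruct (MVT_gen f a b df) as [c [Hc Hd]].
  - intros x Hx. apply H. rewrite Rmin_left in Hx by lra. rewrite Rmax_right in Hx by lra. lra.
  - intros x Hx. rewrite Rmin_left in Hx by lra. rewrite Rmax_right in Hx by lra.
    eapply der_cont. apply H. lra.
  - exists c. rewrite Rmin_left in Hc by lra. rewrite Rmax_right in Hc by lra. split; auto.
Qed.

Lemma incr_le (f df : R -> R) a b : a <= b ->
  (forall t, a <= t <= b -> is_derive f t (df t)) ->
  (forall t, a <= t <= b -> 0 <= df t) -> f a <= f b.
Proof.
  intros Hab H Hp. destruct (mvt f df a b Hab H) as [c [Hc Hd]].
  assert (0 <= df c * (b - a)) by (apply Rmult_le_pos; [apply Hp; lra| lra]). lra.
Qed.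

Lemma decr_le (f df : R -> R) a b : a <= b ->
  (forall t, a <= t <= b -> is_derive f t (df t)) ->
  (forall t, a <= t <= b -> df t <= 0) -> f b <= f a.
Proof.
  intros Hab H Hp. destruct (mvt f df a b Hab H) as [c [Hc Hd]].
  assert (df c * (b - a) <= 0).
  { assert (0 <= - df c * (b - a)) by (apply Rmult_le_pos; [generalize (Hp c Hc); lra| lra]). lra. }
  lra.
Qed.

Lemma incr_lt (f df : R -> R) a b : a < b ->
  (forall t, a <= t <= b -> is_derive f t (df t)) ->
  (forall t, a <= t <= b -> 0 < df t) -> f a < f b.
Proof.
  intros Hab H Hp. destruct (mvt f df a b (Rlt_le _ _ Hab) H) as [c [Hc Hd]].
  assert (0 < df c * (b - a)) by (apply Rmult_lt_0_compat; [apply Hp; lra| lra]). lra.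
Qed.

Lemma const_der (f : R -> R) : (forall t, is_derive f t 0) -> forall t, f t = f 0.
Proof.
  intros H t. destruct (Rle_dec 0 t).
  - destruct (mvt f (fun _ => 0) 0 t r (fun s _ => H s)) as [c [_ Hc]]. lra.
  - destruct (mvt f (fun _ => 0) t 0 ltac:(lra) (fun s _ => H s)) as [c [_ Hc]]. lra.
Qed.

Lemma cont_pos (f : R -> R) t : continuity_pt f t -> 0 < f t ->
  exists eta, 0 < eta /\ forall s, Rabs (s - t) < eta -> 0 < f s.
Proof.
  intros Hc Hp.
  destruct (Hc (f t) Hp) as [al [Hal Hd]].
  exists al; split; auto. intros s Hs.
  destruct (Req_dec s t) as [->|Hne]; auto.
  assert (Hx := Hd s (conj (conj I (not_eq_sym Hne)) Hs)).
  unfold R_dist in Hx. apply Rabs_def2 in Hx. lra.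
Qed.

Lemma cont_neg (f : R -> R) t : continuity_pt f t -> f t < 0 ->
  exists eta, 0 < eta /\ forall s, Rabs (s - t) < eta -> f s < 0.
Proof.
  intros Hc Hp.
  destruct (cont_pos (fun s => - f s) t) as [eta [He H]].
  - apply continuity_pt_opp; auto.
  - lra.
  - exists eta; split; auto. intros s Hs; generalize (H s Hs); lra.
Qed.

Lemma gronwall_fwd (f df : R -> R) C t0 t1 : t0 <= t1 ->
  (forall t, t0 <= t <= t1 -> is_derive f t (df t)) ->
  (forall t, t0 <= t <= t1 -> df t <= C * f t) ->
  f t1 <= f t0 * exp (C * (t1 - t0)).
Proof.
  intros Hle Hd Hb.
  set (g := fun t => f t * exp (- (C * (t - t0)))).
  assert (g t1 <= g t0).
  { apply (decr_le g (fun t => df t * exp (- (C * (t - t0))) + f t * (exp (- (C * (t - t0))) * (-(C * 1))))); auto.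
    - intros t Ht. unfold g. apply (Derive.is_derive_mult f (fun s => exp (- (C * (s - t0))))); [apply Hd; auto|].
      auto_derive; [easy|unfold Rminus; ring].
    - intros t Ht. assert (0 < exp (- (C * (t - t0)))) by apply exp_pos.
      generalize (Hb t Ht); intros. nra. }
  unfold g in H. replace (t0 - t0) with 0 in H by ring.
  rewrite Rmult_0_r, Ropp_0, exp_0, Rmult_1_r in H.
  assert (Hm : exp (- (C * (t1 - t0))) * exp (C * (t1 - t0)) = 1).
  { rewrite <- exp_plus. replace (- (C * (t1 - t0)) + C * (t1 - t0)) with 0 by ring. apply exp_0. }
  assert (0 < exp (C * (t1 - t0))) by apply exp_pos.
  apply Rmult_le_compat_r with (r := exp (C * (t1 - t0))) in H; [|lra].
  rewrite Rmult_assoc, Hm, Rmult_1_r in H. exact H.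
Qed.

Lemma gronwall_bwd (f df : R -> R) C t0 t1 : t0 <= t1 ->
  (forall t, t0 <= t <= t1 -> is_derive f t (df t)) ->
  (forall t, t0 <= t <= t1 -> - (C * f t) <= df t) ->
  f t0 <= f t1 * exp (C * (t1 - t0)).
Proof.
  intros Hle Hd Hb.
  set (g := fun t => f t * exp (C * (t - t1))).
  assert (g t0 <= g t1).
  { apply (incr_le g (fun t => df t * exp (C * (t - t1)) + f t * (exp (C * (t - t1)) * (C * 1)))); auto.
    - intros t Ht. unfold g. apply (Derive.is_derive_mult f (fun s => exp ((C * (s - t1))))); [apply Hd; auto|].
      auto_derive; [easy|unfold Rminus; ring].
    - intros t Ht. assert (0 < exp ((C * (t - t1)))) by apply exp_pos.
      generalize (Hb t Ht); intros. nra. }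
  unfold g in H. replace (t1 - t1) with 0 in H by ring.
  rewrite Rmult_0_r, exp_0, Rmult_1_r in H.
  assert (Hm : exp (C * (t0 - t1)) * exp (C * (t1 - t0)) = 1).
  { rewrite <- exp_plus. replace (C * (t0 - t1) + C * (t1 - t0)) with 0 by ring. apply exp_0. }
  assert (0 < exp (C * (t1 - t0))) by apply exp_pos.
  apply Rmult_le_compat_r with (r := exp (C * (t1 - t0))) in H; [|lra].
  rewrite Rmult_assoc, Hm, Rmult_1_r in H. exact H.
Qed.

Lemma dplus (f g : R -> R) (x df dg : R) : is_derive f x df -> is_derive g x dg ->
  is_derive (fun t => f t + g t) x (df + dg).
Proof. intros; exact (is_derive_plus f g x df dg H H0). Qed.
Lemma dminus (f g : R -> R) (x df dg : R) : is_derive f x df -> is_derive g x dg ->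
  is_derive (fun t => f t - g t) x (df - dg).
Proof. intros; exact (is_derive_minus f g x df dg H H0). Qed.
Lemma dmult (f g : R -> R) (x df dg : R) : is_derive f x df -> is_derive g x dg ->
  is_derive (fun t => f t * g t) x (df * g x + f x * dg).
Proof. intros; exact (Derive.is_derive_mult f g x df dg H H0). Qed.
Lemma dscal (f : R -> R) (k x df : R) : is_derive f x df ->
  is_derive (fun t => k * f t) x (k * df).
Proof. intros; exact (is_derive_scal f x k df H). Qed.
Lemma dopp (f : R -> R) (x df : R) : is_derive f x df ->
  is_derive (fun t => - f t) x (- df).
Proof. intros; exact (is_derive_opp f x df H). Qed.
Lemma dsq (f : R -> R) (x df : R) : is_derive f x df ->
  is_derive (fun t => f t ^ 2) x (2 * f x * df).
Proof. intros H. eapply is_derive_eq. apply (is_derive_pow f 2 x df H). simpl; ring. Qed.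
Lemma dshift (f : R -> R) (x d df : R) : is_derive f (x + d) df ->
  is_derive (fun t => f (t + d)) x df.
Proof.
  intros H. eapply is_derive_eq. apply (der_comp f (fun t => t + d) x df 1 H).
  auto_derive; [easy|ring]. ring.
Qed.

Definition hs (a x dx : R -> R) := forall t, 0 <= t ->
  is_derive x t (dx t) /\ is_derive dx t (- (a t * x t)).

Definition nrg (x dx : R -> R) t := x t ^ 2 + dx t ^ 2.

Lemma nrg_der a x dx t : 0 <= t -> hs a x dx ->
  is_derive (nrg x dx) t (2 * (1 - a t) * x t * dx t).
Proof.
  intros Ht H. destruct (H t Ht) as [H1 H2]. unfold nrg.
  eapply is_derive_eq. apply dplus; apply dsq; eassumption. ring.
Qed.

Lemma nrg_bound_aux (a x d B : R) : Rabs a <= B ->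
  Rabs (2 * (1 - a) * x * d) <= (1 + B) * (x ^ 2 + d ^ 2).
Proof.
  intros Ha. apply Rabs_le_between in Ha.
  rewrite Rabs_mult.
  assert (H1 : Rabs (2 * (1 - a) * x) * Rabs d = Rabs (1 - a) * (2 * Rabs x * Rabs d)).
  { rewrite !Rabs_mult, (Rabs_right 2) by lra. ring. }
  rewrite H1.
  assert (H2 : 2 * Rabs x * Rabs d <= x ^ 2 + d ^ 2).
  { assert (0 <= (Rabs x - Rabs d) ^ 2) by apply pow2_ge_0.
    rewrite <- (pow2_abs x), <- (pow2_abs d). nra. }
  assert (H3 : Rabs (1 - a) <= 1 + B) by (apply Rabs_le; lra).
  assert (0 <= 2 * Rabs x * Rabs d) by (generalize (Rabs_pos x) (Rabs_pos d); nra).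
  apply Rmult_le_compat; auto using Rabs_pos.
Qed.

Lemma hs_growth a x dx B : hs a x dx -> (forall t, 0 <= t -> Rabs (a t) <= B) ->
  forall t0 t1, 0 <= t0 <= t1 ->
  nrg x dx t1 <= nrg x dx t0 * exp ((1 + B) * (t1 - t0)) /\
  nrg x dx t0 <= nrg x dx t1 * exp ((1 + B) * (t1 - t0)).
Proof.
  intros H HB t0 t1 Ht. split.
  - apply (gronwall_fwd _ (fun t => 2 * (1 - a t) * x t * dx t)); try lra.
    + intros t Ht'. apply nrg_der; auto; lra.
    + intros t Ht'. generalize (nrg_bound_aux (a t) (x t) (dx t) B (HB t ltac:(lra))).
      unfold nrg. intros Hb. apply Rabs_le_between in Hb. lra.
  - apply (gronwall_bwd _ (fun t => 2 * (1 - a t) * x t * dx t)); try lra.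
    + intros t Ht'. apply nrg_der; auto; lra.
    + intros t Ht'. generalize (nrg_bound_aux (a t) (x t) (dx t) B (HB t ltac:(lra))).
      unfold nrg. intros Hb. apply Rabs_le_between in Hb. lra.
Qed.

Lemma hs_uniq a x dx B : hs a x dx -> (forall t, 0 <= t -> Rabs (a t) <= B) ->
  forall t0, 0 <= t0 -> x t0 = 0 -> dx t0 = 0 ->
  forall t, 0 <= t -> x t = 0 /\ dx t = 0.
Proof.
  intros H HB t0 Ht0 Hx Hd t Ht.
  assert (Hz : nrg x dx t0 = 0) by (unfold nrg; rewrite Hx, Hd; ring).
  assert (Hle : nrg x dx t <= 0).
  { destruct (Rle_dec t0 t).
    - destruct (hs_growth a x dx B H HB t0 t ltac:(lra)) as [H1 _]. rewrite Hz in H1. lra.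
    - destruct (hs_growth a x dx B H HB t t0 ltac:(lra)) as [_ H1]. rewrite Hz in H1. lra. }
  unfold nrg in Hle. split; nra.
Qed.

Lemma hs_lin a x dx y dy p q : hs a x dx -> hs a y dy ->
  hs a (fun t => p * x t + q * y t) (fun t => p * dx t + q * dy t).
Proof.
  intros H1 H2 t Ht. destruct (H1 t Ht) as [A1 B1]. destruct (H2 t Ht) as [A2 B2].
  split; eapply is_derive_eq; try (apply dplus; apply dscal; eassumption); ring.
Qed.

Lemma hs_shift a x dx tau : 0 <= tau -> (forall t, 0 <= t -> a (t + tau) = a t) ->
  hs a x dx -> hs a (fun t => x (t + tau)) (fun t => dx (t + tau)).
Proof.
  intros Htau Hp H t Ht. destruct (H (t + tau) ltac:(lra)) as [A B].
  split; apply dshift; auto. rewrite <- Hp; auto.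
Qed.

Lemma wronsk_const a x dx y dy : hs a x dx -> hs a y dy ->
  forall t, 0 <= t -> x t * dy t - dx t * y t = x 0 * dy 0 - dx 0 * y 0.
Proof.
  intros H1 H2 t Ht.
  assert (Hd : forall s, 0 <= s <= t -> is_derive (fun s => x s * dy s - dx s * y s) s 0).
  { intros s Hs. destruct (H1 s ltac:(lra)) as [A1 B1]. destruct (H2 s ltac:(lra)) as [A2 B2].
    eapply is_derive_eq. apply dminus; apply dmult; eassumption. ring. }
  destruct (mvt _ (fun _ => 0) 0 t Ht Hd) as [c [_ Hc]]. lra.
Qed.

Fixpoint rec (q u0 u1 : R) (n : nat) : R * R :=
  match n with
  | O => (u0, u1)
  | S n => let p := rec q u0 u1 n in (snd p, q * snd p - fst p)
  end.

Lemma rec_inv q u0 u1 n :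
  fst (rec q u0 u1 n) ^ 2 - q * fst (rec q u0 u1 n) * snd (rec q u0 u1 n) + snd (rec q u0 u1 n) ^ 2
  = u0 ^ 2 - q * u0 * u1 + u1 ^ 2.
Proof. induction n; simpl in *; auto. rewrite <- IHn. ring. Qed.

Lemma quad_lb q a b : Rabs q < 2 ->
  (1 - Rabs q / 2) * a ^ 2 <= a ^ 2 - q * a * b + b ^ 2.
Proof.
  intros Hq. destruct (Rcase_abs q) as [Hn|Hp].
  - rewrite Rabs_left in * by lra.
    assert (0 <= (a + b) ^ 2) by apply pow2_ge_0.
    assert (0 <= -q * (a+b)^2) by nra.
    assert (0 <= (1 + q/2) * b^2) by (assert (0 <= b^2) by apply pow2_ge_0; nra).
    nra.
  - rewrite Rabs_right in * by lra.
    assert (0 <= (a - b) ^ 2) by apply pow2_ge_0.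
    assert (0 <= q * (a-b)^2) by nra.
    assert (0 <= (1 - q/2) * b^2) by (assert (0 <= b^2) by apply pow2_ge_0; nra).
    nra.
Qed.

Lemma rec_bound q u0 u1 n : Rabs q < 2 ->
  fst (rec q u0 u1 n) ^ 2 <= (u0 ^ 2 - q * u0 * u1 + u1 ^ 2) / (1 - Rabs q / 2).
Proof.
  intros Hq. rewrite <- (rec_inv q u0 u1 n).
  assert (h := quad_lb q (fst (rec q u0 u1 n)) (snd (rec q u0 u1 n)) Hq).
  assert (hd : 0 < 1 - Rabs q / 2) by lra.
  apply Rmult_le_reg_r with (1 - Rabs q / 2); auto.
  unfold Rdiv; rewrite Rmult_assoc, Rinv_l, Rmult_1_r by lra. lra.
Qed.

Lemma rec_rep (phi : R -> R) q tau :
  (forall t, 0 <= t -> phi (t + tau + tau) = - phi t + q * phi (t + tau)) ->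
  0 <= tau ->
  forall n t, 0 <= t ->
  phi (t + INR n * tau) = fst (rec q 1 0 n) * phi t + fst (rec q 0 1 n) * phi (t + tau) /\
  phi (t + INR n * tau + tau) = snd (rec q 1 0 n) * phi t + snd (rec q 0 1 n) * phi (t + tau).
Proof.
  intros Hid Htau n. induction n as [|n IH]; intros t Ht.
  - simpl. replace (t + 0 * tau) with t by ring. split; ring.
  - destruct (IH t Ht) as [H1 H2]. simpl (rec _ _ _ (S n)). simpl fst; simpl snd.
    replace (t + INR (S n) * tau) with (t + INR n * tau + tau) by (rewrite S_INR; ring).
    split; [exact H2|].
    assert (0 <= INR n) by apply pos_INR.
    rewrite (Hid (t + INR n * tau)) by nra. rewrite H1, H2. ring.
Qed.

Lemma sq_comb A B u v L : A ^ 2 <= L -> B ^ 2 <= L ->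
  (A * u + B * v) ^ 2 <= 2 * L * (u ^ 2 + v ^ 2).
Proof.
  intros HA HB.
  assert (0 <= (A*u - B*v)^2) by apply pow2_ge_0.
  assert (A^2 * u^2 <= L * u^2) by (apply Rmult_le_compat_r; auto; apply pow2_ge_0).
  assert (B^2 * v^2 <= L * v^2) by (apply Rmult_le_compat_r; auto; apply pow2_ge_0).
  nra.
Qed.

Lemma cs2 a b c d : (a * d - b * c) ^ 2 <= (a ^ 2 + b ^ 2) * (c ^ 2 + d ^ 2).
Proof. assert (0 <= (a*c + b*d)^2) by apply pow2_ge_0. nra. Qed.

Lemma exp_mono x y : x <= y -> exp x <= exp y.
Proof. intros [H|H]; [apply Rlt_le, exp_increasing; auto| subst; lra]. Qed.

Lemma floquet a B tau : 0 < tau -> (forall t, 0 <= t -> Rabs (a t) <= B) ->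
  (forall t, 0 <= t -> a (t + tau) = a t) ->
  (forall v dv lam, hs a v dv ->
     (forall t, 0 <= t -> v (t + tau) = lam * v t /\ dv (t + tau) = lam * dv t) ->
     v 0 = 0 /\ dv 0 = 0) ->
  exists K, 0 < K /\ forall x dx, hs a x dx -> forall t, 0 <= t -> nrg x dx t <= K * nrg x dx 0.
Proof.
  intros Htau HB Hper Hne.
  destruct (classic (exists x0 dx0, hs a x0 dx0 /\ (x0 0 <> 0 \/ dx0 0 <> 0)))
    as [[x0 [dx0 [Hx0 Hnz]]] | Hall].
  2: { exists 1. split; [lra|]. intros x dx Hx t Ht.
       assert (H0 : x 0 = 0 /\ dx 0 = 0).
       { destruct (Req_dec (x 0) 0); destruct (Req_dec (dx 0) 0); auto;
         exfalso; apply Hall; exists x, dx; auto. }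
       destruct H0 as [H0 H1].
       destruct (hs_uniq a x dx B Hx HB 0 (Rle_refl 0) H0 H1 t Ht) as [E1 E2].
       unfold nrg. rewrite E1, E2, H0, H1. lra. }
  set (z := fun t => x0 (t + tau)). set (dz := fun t => dx0 (t + tau)).
  assert (Hz : hs a z dz) by (apply hs_shift; auto; lra).
  set (W0 := x0 0 * dz 0 - dx0 0 * z 0).
  assert (Heig : forall lam, z 0 = lam * x0 0 -> dz 0 = lam * dx0 0 -> False).
  { intros lam E1 E2.
    assert (Hv := hs_lin a z dz x0 dx0 1 (- lam) Hz Hx0).
    assert (Hv0 : forall t, 0 <= t -> z t = lam * x0 t /\ dz t = lam * dx0 t).
    { intros t Ht. destruct (hs_uniq a _ _ B Hv HB 0 (Rle_refl 0)) with (t := t) as [F1 F2];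
        try (rewrite ?E1, ?E2; ring); auto. split; lra. }
    destruct (Hne x0 dx0 lam Hx0 Hv0) as [F1 F2].
    destruct Hnz; auto. }
  assert (HW0 : W0 <> 0).
  { intros HW. unfold W0 in HW. destruct (Req_dec (x0 0) 0) as [Ex|Ex].
    - assert (Ed : dx0 0 <> 0) by (destruct Hnz; auto).
      apply (Heig (dz 0 / dx0 0)).
      + rewrite Ex in HW |- *. assert (Hzz : dx0 0 * z 0 = 0) by lra.
        assert (z 0 = 0).
        { apply Rmult_integral in Hzz. destruct Hzz; auto. contradiction. }
        rewrite H; ring.
      + field; auto.
    - apply (Heig (z 0 / x0 0)).
      + field; auto.
      + apply (Rmult_eq_reg_l (x0 0)); auto. field_simplify; auto. lra. }
  set (z2 := fun t => x0 (t + tau + tau)). set (dz2 := fun t => dx0 (t + tau + tau)).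
  assert (Hz2 : hs a z2 dz2).
  { apply (hs_shift a z dz tau); auto; lra. }
  set (p := (z2 0 * dz 0 - dz2 0 * z 0) / W0).
  set (q := (x0 0 * dz2 0 - dx0 0 * z2 0) / W0).
  assert (Hrep : forall t, 0 <= t -> z2 t = p * x0 t + q * z t /\ dz2 t = p * dx0 t + q * dz t).
  { intros t Ht.
    assert (Hw := hs_lin a z2 dz2 _ _ 1 (-1) Hz2 (hs_lin a x0 dx0 z dz p q Hx0 Hz)).
    destruct (hs_uniq a _ _ B Hw HB 0 (Rle_refl 0)) with (t := t) as [F1 F2]; auto.
    - cbv beta. unfold p, q. unfold W0 in *. field. exact HW0.
    - cbv beta. unfold p, q. unfold W0 in *. field. exact HW0.
    - split; lra. }
  assert (Hp : p = -1).
  { assert (Hw := wronsk_const a x0 dx0 z dz Hx0 Hz tau (Rlt_le _ _ Htau)).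
    fold W0 in Hw. unfold p. unfold z2, dz2, z, dz in *.
    replace (0 + tau) with tau in * by ring.
    apply (Rmult_eq_reg_l W0); auto. field_simplify; auto.
    unfold W0, z, dz in *. replace (0 + tau) with tau in * by ring. lra. }
  assert (Hid : forall t, 0 <= t -> x0 (t + tau + tau) = - x0 t + q * x0 (t + tau)
                             /\ dx0 (t + tau + tau) = - dx0 t + q * dx0 (t + tau)).
  { intros t Ht. destruct (Hrep t Ht) as [F1 F2]. rewrite Hp in *. unfold z2, dz2, z, dz in *. split; lra. }
  assert (Hq : Rabs q < 2).
  { destruct (Rlt_dec (Rabs q) 2) as [h|h]; auto. exfalso.
    assert (Hq4 : 0 <= q ^ 2 - 4).
    { apply Rnot_lt_le in h. rewrite <- (pow2_abs q). nra. }
    set (mu := (q + sqrt (q ^ 2 - 4)) / 2).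
    assert (Hmu : mu ^ 2 - q * mu + 1 = 0).
    { unfold mu. assert (Hs := sqrt_sqrt _ Hq4). nra. }
    assert (Hmu0 : mu <> 0) by (intro E; rewrite E in Hmu; lra).
    assert (Hv := hs_lin a z dz x0 dx0 1 (- mu) Hz Hx0).
    destruct (Hne _ _ (/ mu) Hv) as [F1 F2].
    - assert (Hqm : q = mu + / mu).
      { apply (Rmult_eq_reg_r mu); [|auto]. rewrite Rmult_plus_distr_r, Rinv_l by auto. nra. }
      intros s Hs. destruct (Hid s Hs) as [G1 G2]. cbv beta. unfold z, dz. rewrite G1, G2.
      rewrite Hqm. split; field; auto.
    - apply (Heig mu); lra. }
  set (Lam := 1 / (1 - Rabs q / 2)).
  assert (HLam : 0 < Lam) by (unfold Lam; apply Rdiv_lt_0_compat; lra).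
  assert (HA : forall n, fst (rec q 1 0 n) ^ 2 <= Lam).
  { intros n. eapply Rle_trans. apply rec_bound; auto. unfold Lam. right. field. lra. }
  assert (HB' : forall n, fst (rec q 0 1 n) ^ 2 <= Lam).
  { intros n. eapply Rle_trans. apply rec_bound; auto. unfold Lam. right. field. lra. }
  set (C := 1 + B).
  set (M := 4 * Lam * exp (C * (2 * tau))).
  assert (HM : 0 < M) by (unfold M; assert (0 < exp (C * (2 * tau))) by apply exp_pos; nra).
  set (F := nrg x0 dx0).
  assert (HF0 : 0 <= F 0) by (unfold F, nrg; nra).
  assert (Hexp : forall s, 0 <= s <= 2 * tau -> F s <= F 0 * exp (C * (2 * tau))).
  { intros s Hs. destruct (hs_growth a x0 dx0 B Hx0 HB 0 s ltac:(lra)) as [G1 _].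
    eapply Rle_trans; [exact G1|]. apply Rmult_le_compat_l; auto.
    apply exp_mono. apply Rmult_le_compat_l; [|lra].
    assert (0 <= B) by (generalize (HB 0 (Rle_refl 0)) (Rabs_pos (a 0)); lra).
    unfold C; lra. }
  assert (HFt : forall t, 0 <= t -> F t <= M * F 0).
  { intros t Ht. destruct (nfloor_ex (t / tau)) as [n [Hn1 Hn2]].
    { apply Rdiv_le_0_compat; lra. }
    set (s := t - INR n * tau).
    assert (Hs0 : 0 <= s).
    { unfold s. apply Rmult_le_compat_r with (r := tau) in Hn1; [|lra].
      unfold Rdiv in Hn1. rewrite Rmult_assoc, Rinv_l, Rmult_1_r in Hn1 by lra. lra. }
    assert (Hs1 : s <= tau).
    { unfold s. apply Rmult_lt_compat_r with (r := tau) in Hn2; [|lra].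
      unfold Rdiv in Hn2. rewrite Rmult_assoc, Rinv_l, Rmult_1_r in Hn2 by lra. lra. }
    assert (Et : t = s + INR n * tau) by (unfold s; ring).
    destruct (rec_rep x0 q tau (fun u hu => proj1 (Hid u hu)) (Rlt_le _ _ Htau) n s Hs0) as [R1 _].
    destruct (rec_rep dx0 q tau (fun u hu => proj2 (Hid u hu)) (Rlt_le _ _ Htau) n s Hs0) as [R2 _].
    unfold F, nrg. rewrite Et, R1, R2.
    assert (E1 := sq_comb _ _ (x0 s) (x0 (s + tau)) Lam (HA n) (HB' n)).
    assert (E2 := sq_comb _ _ (dx0 s) (dx0 (s + tau)) Lam (HA n) (HB' n)).
    assert (K1 := Hexp s ltac:(lra)). assert (K2 := Hexp (s + tau) ltac:(lra)).
    unfold F, nrg in K1, K2, HF0 |- *. unfold M. 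
    assert (0 <= F 0 * exp (C * (2 * tau))) by (apply Rmult_le_pos; auto; apply Rlt_le, exp_pos).
    unfold F, nrg in H. nra. }
  set (G0 := nrg z dz 0).
  assert (HG0 : 0 <= G0) by (unfold G0, nrg; nra).
  assert (HWp : 0 < W0 ^ 2) by (apply pow2_gt_0; auto).
  exists (2 * (G0 + F 0) * M * F 0 / W0 ^ 2 + 1). split.
  { assert (0 <= 2 * (G0 + F 0) * M * F 0 / W0 ^ 2).
    { apply Rdiv_le_0_compat; auto. apply Rmult_le_pos; auto. nra. }
    lra. }
  intros x dx Hx t Ht.
  set (al := (x 0 * dz 0 - dx 0 * z 0) / W0).
  set (be := (x0 0 * dx 0 - dx0 0 * x 0) / W0).
  assert (Hw := hs_lin a x dx _ _ 1 (-1) Hx (hs_lin a x0 dx0 z dz al be Hx0 Hz)).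
  destruct (hs_uniq a _ _ B Hw HB 0 (Rle_refl 0)) with (t := t) as [F1 F2]; auto.
  { cbv beta. unfold al, be. unfold W0 in *. field. exact HW0. }
  { cbv beta. unfold al, be. unfold W0 in *. field. exact HW0. }
  cbv beta in F1, F2.
  assert (Ex : x t = al * x0 t + be * z t) by lra.
  assert (Ed : dx t = al * dx0 t + be * dz t) by lra.
  assert (HFt' := HFt t Ht). assert (HGt := HFt (t + tau) ltac:(lra)).
  assert (Hal : al ^ 2 <= nrg x dx 0 * G0 / W0 ^ 2).
  { unfold al. unfold Rdiv. rewrite Rpow_mult_distr, pow_inv.
    apply Rmult_le_compat_r. apply Rlt_le, Rinv_0_lt_compat; auto.
    unfold G0, nrg. eapply Rle_trans. apply cs2. right; ring. }
  assert (Hbe : be ^ 2 <= nrg x dx 0 * F 0 / W0 ^ 2).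
  { unfold be. unfold Rdiv. rewrite Rpow_mult_distr, pow_inv.
    apply Rmult_le_compat_r. apply Rlt_le, Rinv_0_lt_compat; auto.
    unfold F, nrg. eapply Rle_trans. apply cs2. right; ring. }
  assert (HFt2 : 0 <= F t) by (unfold F, nrg; nra).
  assert (HGt2 : 0 <= F (t + tau)) by (unfold F, nrg; nra).
  assert (Hsum : nrg x dx t <= 2 * al ^ 2 * F t + 2 * be ^ 2 * F (t + tau)).
  { unfold nrg at 1. rewrite Ex, Ed. unfold F, nrg, z, dz.
    assert (0 <= (al * x0 t - be * x0 (t + tau)) ^ 2) by apply pow2_ge_0.
    assert (0 <= (al * dx0 t - be * dx0 (t + tau)) ^ 2) by apply pow2_ge_0.
    nra. }
  assert (HN0 : 0 <= nrg x dx 0) by (unfold nrg; nra).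
  set (N := nrg x dx 0) in *.
  assert (H1 : al ^ 2 * F t <= N * G0 / W0 ^ 2 * (M * F 0)).
  { apply Rmult_le_compat; auto. apply pow2_ge_0. }
  assert (H2 : be ^ 2 * F (t + tau) <= N * F 0 / W0 ^ 2 * (M * F 0)).
  { apply Rmult_le_compat; auto. apply pow2_ge_0. }
  assert (H3 : N * G0 / W0 ^ 2 * (M * F 0) + N * F 0 / W0 ^ 2 * (M * F 0)
               = (G0 + F 0) * M * F 0 / W0 ^ 2 * N) by (field; auto).
  assert (H4 : 0 <= (G0 + F 0) * M * F 0 / W0 ^ 2 * N).
  { apply Rmult_le_pos; auto. apply Rdiv_le_0_compat; auto. apply Rmult_le_pos; auto. nra. }
  nra.
Qed.

Lemma ivt2 (f : R -> R) p q : p <= q -> (forall t, p <= t <= q -> continuity_pt f t) ->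
  f p * f q <= 0 -> exists z, p <= z <= q /\ f z = 0.
Proof.
  intros Hpq Hc Hs.
  destruct (Req_dec (f p) 0) as [E|E]; [exists p; split; auto; lra|].
  destruct (Req_dec (f q) 0) as [E'|E']; [exists q; split; auto; lra|].
  destruct (Rle_lt_or_eq_dec p q Hpq) as [Hlt|Heq]; [|subst; exfalso; nra].
  destruct (Rlt_dec (f p) 0) as [Hn|Hn].
  - assert (0 < f q) by nra.
    destruct (Ranalysis5.IVT_interv f p q Hc Hlt Hn H) as [z [Hz1 Hz2]]. exists z; auto.
  - assert (f q < 0) by nra.
    destruct (Ranalysis5.IVT_interv (fun t => - f t) p q) as [z [Hz1 Hz2]]; auto.
    + intros t Ht. apply continuity_pt_opp. auto.
    + lra.
    + lra.
    + exists z; split; auto; lra.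
Qed.

Lemma sign_const (f : R -> R) r m :
  (forall t, Rmin r m <= t <= Rmax r m -> continuity_pt f t /\ f t <> 0) ->
  0 < f m -> 0 < f r.
Proof.
  intros H Hm. destruct (Rlt_dec 0 (f r)) as [h|h]; auto. exfalso.
  destruct (Rle_dec r m) as [Hrm|Hrm].
  - destruct (ivt2 f r m Hrm) as [z [Hz1 Hz2]].
    + intros t Ht. apply H. rewrite Rmin_left, Rmax_right; lra.
    + nra.
    + apply (H z). rewrite Rmin_left, Rmax_right; lra. auto.
  - destruct (ivt2 f m r ltac:(lra)) as [z [Hz1 Hz2]].
    + intros t Ht. apply H. rewrite Rmin_right, Rmax_left; lra.
    + nra.
    + apply (H z). rewrite Rmin_right, Rmax_left; lra. auto.
Qed.

Lemma hs_neg a x dx : hs a x dx -> hs a (fun t => - x t) (fun t => - dx t).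
Proof.
  intros H t Ht. destruct (H t Ht) as [A B]. split.
  - apply dopp; auto.
  - eapply is_derive_eq. apply dopp; eauto. ring.
Qed.

Lemma hs_cont a x dx t : hs a x dx -> 0 <= t -> continuity_pt x t.
Proof. intros H Ht. eapply der_cont. apply (H t Ht). Qed.
Lemma hs_contd a x dx t : hs a x dx -> 0 <= t -> continuity_pt dx t.
Proof. intros H Ht. eapply der_cont. apply (H t Ht). Qed.

Lemma W_der a x dx K s0 t : hs a x dx -> 0 <= t ->
  is_derive (fun t => dx t * sin (K * (t - s0)) - x t * (K * cos (K * (t - s0)))) t
    ((K ^ 2 - a t) * x t * sin (K * (t - s0))).
Proof.
  intros H Ht. destruct (H t Ht) as [A B].
  assert (Hs : is_derive (fun t => sin (K * (t - s0))) t (K * cos (K * (t - s0)))).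
  { auto_derive; try easy; unfold Rminus; ring. }
  assert (Hc : is_derive (fun t => K * cos (K * (t - s0))) t (- K ^ 2 * sin (K * (t - s0)))).
  { auto_derive; try easy; unfold Rminus; ring. }
  eapply is_derive_eq.
  apply (dminus (fun t => dx t * sin (K * (t - s0))) (fun t => x t * (K * cos (K * (t - s0))))).
  apply (dmult dx (fun t => sin (K * (t - s0)))); eassumption.
  apply (dmult x (fun t => K * cos (K * (t - s0)))); eassumption.
  cbv beta. ring.
Qed.

Lemma W_cont a x dx K s0 t : hs a x dx -> 0 <= t -> continuity_pt a t ->
  continuity_pt (fun t => (K ^ 2 - a t) * x t * sin (K * (t - s0))) t.
Proof.
  intros H Ht Ha.
  apply (continuity_pt_mult (fun t => (K ^ 2 - a t) * x t) (fun t => sin (K * (t - s0)))).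
  apply (continuity_pt_mult (fun t => (K ^ 2 - a t)) x).
  apply (continuity_pt_minus (fun _ => K ^ 2) a). apply continuity_pt_const; intros u v; auto. auto.
  eapply hs_cont; eauto.
  eapply der_cont. instantiate (1 := K * cos (K * (t - s0))).
  auto_derive; try easy; unfold Rminus; ring.
Qed.

Lemma decr_lt (f df : R -> R) a b : a < b ->
  (forall t, a <= t <= b -> is_derive f t (df t)) ->
  (forall t, a <= t <= b -> df t < 0) -> f b < f a.
Proof.
  intros Hab H Hp. destruct (mvt f df a b (Rlt_le _ _ Hab) H) as [c [Hc Hd]].
  assert (0 < - df c * (b - a)) by (apply Rmult_lt_0_compat; [generalize (Hp c Hc); lra| lra]). lra.
Qed.

Lemma end_sign a x dx s s' : hs a x dx -> 0 <= s < s' -> x s' = 0 ->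
  (forall r, s < r < s' -> 0 < x r) -> dx s' <= 0.
Proof.
  intros H Hs Hx Hp. destruct (Rle_dec (dx s') 0) as [h|h]; auto. exfalso.
  destruct (cont_pos dx s') as [eta [He Heta]]; [eapply hs_contd; eauto; lra| lra |].
  set (h0 := Rmin (eta / 2) ((s' - s) / 2)).
  assert (Hh0 : 0 < h0) by (unfold h0; apply Rmin_glb_lt; lra).
  assert (Hh1 : h0 <= eta / 2) by apply Rmin_l.
  assert (Hh2 : h0 <= (s' - s) / 2) by apply Rmin_r.
  destruct (mvt x dx (s' - h0) s' ltac:(lra)) as [c [Hc Hd]].
  { intros t Ht. apply (H t ltac:(lra)). }
  assert (0 < dx c) by (apply Heta; apply Rabs_def1; lra).
  assert (0 < x (s' - h0)) by (apply Hp; lra).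
  rewrite Hx in Hd. nra.
Qed.

Lemma first_zero (x : R -> R) s e : s < e ->
  (forall t, s <= t <= e -> continuity_pt x t) -> x e = 0 ->
  (exists eta, 0 < eta /\ forall r, s < r < s + eta -> x r <> 0) ->
  exists s', s < s' <= e /\ x s' = 0 /\ forall r, s < r < s' -> x r <> 0.
Proof.
  intros Hse Hc He [eta [Heta Hn]].
  set (P := fun t => s <= t <= e /\ forall r, s < r < t -> x r <> 0).
  assert (Hb : bound P) by (exists e; intros t [Ht _]; lra).
  assert (Hex : exists t, P t) by (exists s; split; [lra| intros r Hr; lra]).
  destruct (completeness P Hb Hex) as [T [HT1 HT2]].
  set (t1 := Rmin (s + eta / 2) e).
  assert (Ht1 : P t1).
  { split. unfold t1. split. apply Rmin_glb; lra. apply Rmin_r.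
    intros r Hr. apply Hn. split. lra. assert (t1 <= s + eta / 2) by apply Rmin_l. lra. }
  assert (HTs : s < T).
  { assert (t1 <= T) by (apply HT1; auto). assert (s < t1) by (unfold t1; apply Rmin_glb_lt; lra). lra. }
  assert (HTe : T <= e) by (apply HT2; intros t [Ht _]; lra).
  assert (Hin : forall r, s < r < T -> x r <> 0).
  { intros r Hr. destruct (classic (exists t, P t /\ r < t)) as [[t [[_ Pt] Hrt]]|Hno].
    - apply Pt. lra.
    - exfalso. assert (T <= r).
      { apply HT2. intros t Pt. destruct (Rle_dec t r); auto. exfalso. apply Hno. exists t. split; auto. lra. }
      lra. }
  exists T. split; [lra|]. split; auto.
  destruct (Req_dec T e) as [->|HTne]; auto.
  destruct (Req_dec (x T) 0) as [|Hxn]; auto. exfalso.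
  destruct (cont_pos (fun t => x t * x t) T) as [d [Hd Hdd]].
  { apply (continuity_pt_mult x x); apply Hc; lra. }
  { destruct (Rlt_dec 0 (x T)); [nra|]. assert (x T < 0) by lra. nra. }
  set (t2 := Rmin (T + d / 2) e).
  assert (Ht2 : P t2).
  { split. unfold t2. split. apply Rmin_glb; lra. apply Rmin_r.
    intros r Hr. destruct (Rlt_dec r T). apply Hin; lra.
    assert (t2 <= T + d / 2) by apply Rmin_l.
    assert (Hq := Hdd r ltac:(apply Rabs_def1; lra)). intro E. rewrite E in Hq. lra. }
  assert (T < t2) by (unfold t2; apply Rmin_glb_lt; lra).
  assert (t2 <= T) by (apply HT1; auto). lra.
Qed.

Lemma arg_le_pi Om s t L : 0 < Om -> 0 <= t - s <= L -> L <= PI / Om -> 0 <= Om * (t - s) <= PI.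
Proof.
  intros HO Ht HL. split. nra.
  assert (Om * (t - s) <= Om * (PI / Om)) by (apply Rmult_le_compat_l; lra).
  replace (Om * (PI / Om)) with PI in H by (field; lra). lra.
Qed.

Lemma spacing_pos a x dx Om s s' : 0 < Om -> hs a x dx -> 0 <= s < s' -> s' - s <= PI / Om ->
  x s = 0 -> x s' = 0 -> (forall r, s < r < s' -> 0 < x r) ->
  (forall t, 0 <= t -> a t <= Om ^ 2) ->
  (exists ts, s < ts < s' /\ a ts < Om ^ 2 /\ continuity_pt a ts) -> False.
Proof.
  intros HO H Hs HL Hx0 Hx1 Hp Ha [ts [Hts [Hats Hcts]]].
  set (W := fun t => dx t * sin (Om * (t - s)) - x t * (Om * cos (Om * (t - s)))).
  set (dW := fun t => (Om ^ 2 - a t) * x t * sin (Om * (t - s))).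
  assert (HdW : forall t, s <= t -> is_derive W t (dW t)).
  { intros t Ht. apply W_der; auto; lra. }
  assert (Hpos : forall t, s <= t <= s' -> 0 <= dW t).
  { intros t Ht. unfold dW. apply Rmult_le_pos. apply Rmult_le_pos.
    generalize (Ha t ltac:(lra)); lra.
    destruct (Req_dec t s) as [->|]; [lra|]. destruct (Req_dec t s') as [->|]; [lra|].
    apply Rlt_le, Hp; lra.
    destruct (arg_le_pi Om s t (s' - s)) as [A1 A2]; auto; try lra. apply sin_ge_0; auto. }
  assert (HW0 : W s = 0).
  { unfold W. rewrite Hx0. replace (s - s) with 0 by ring. rewrite Rmult_0_r, sin_0. ring. }
  assert (HW1 : W s' <= 0).
  { unfold W. rewrite Hx1.
    assert (dx s' <= 0) by (apply (end_sign a x dx s s'); auto).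
    destruct (arg_le_pi Om s s' (s' - s)) as [A1 A2]; auto; try lra.
    assert (0 <= sin (Om * (s' - s))) by (apply sin_ge_0; auto). nra. }
  assert (Hdts : 0 < dW ts).
  { unfold dW. apply Rmult_lt_0_compat. apply Rmult_lt_0_compat. lra. apply Hp; lra.
    destruct (arg_le_pi Om s ts (s' - s)) as [A1 A2]; auto; try lra.
    apply sin_gt_0. nra.
    destruct (Req_dec (Om * (ts - s)) PI) as [E|E]; [|lra].
    exfalso. assert (Om * (s' - s) <= PI).
    { destruct (arg_le_pi Om s s' (s' - s)); auto; lra. }
    nra. }
  destruct (cont_pos dW ts) as [eta [He Heta]].
  { apply (W_cont a x dx Om s ts); auto; lra. }
  { auto. }
  set (h := Rmin (eta / 2) (Rmin ((ts - s) / 2) ((s' - ts) / 2))).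
  assert (Hh : 0 < h) by (unfold h; repeat apply Rmin_glb_lt; lra).
  assert (Hh1 : h <= eta / 2) by apply Rmin_l.
  assert (Hh2 : h <= (ts - s) / 2) by (unfold h; eapply Rle_trans; [apply Rmin_r| apply Rmin_l]).
  assert (Hh3 : h <= (s' - ts) / 2) by (unfold h; eapply Rle_trans; [apply Rmin_r| apply Rmin_r]).
  assert (E1 : W s <= W (ts - h)).
  { apply (incr_le W dW); try lra. intros t Ht; apply HdW; lra. intros t Ht; apply Hpos; lra. }
  assert (E2 : W (ts - h) < W (ts + h)).
  { apply (incr_lt W dW); try lra. intros t Ht; apply HdW; lra.
    intros t Ht; apply Heta. apply Rabs_def1; lra. }
  assert (E3 : W (ts + h) <= W s').
  { apply (incr_le W dW); try lra. intros t Ht; apply HdW; lra. intros t Ht; apply Hpos; lra. }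
  lra.
Qed.

Lemma sign_open (x : R -> R) s s' (Hc : forall t, s < t < s' -> continuity_pt x t) :
  (forall r, s < r < s' -> x r <> 0) ->
  (forall r, s < r < s' -> 0 < x r) \/ (forall r, s < r < s' -> 0 < - x r).
Proof.
  intros Hn. destruct (Rle_dec s' s) as [Hss|Hss]; [left; intros; lra|].
  set (m := (s + s') / 2).
  assert (Hm : s < m < s') by (unfold m; lra).
  destruct (Rlt_dec 0 (x m)) as [P|P].
  - left. intros r Hr. apply (sign_const x r m); auto.
    intros t Ht. assert (s < t < s').
    { split; [apply Rlt_le_trans with (Rmin r m)| apply Rle_lt_trans with (Rmax r m)]; try lra.
      apply Rmin_glb_lt; lra. apply Rmax_lub_lt; lra. }
    split; auto.
  - right. intros r Hr. apply (sign_const (fun t => - x t) r m); auto.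
    + intros t Ht. assert (s < t < s').
      { split; [apply Rlt_le_trans with (Rmin r m)| apply Rle_lt_trans with (Rmax r m)]; try lra.
        apply Rmin_glb_lt; lra. apply Rmax_lub_lt; lra. }
      split. apply continuity_pt_opp; auto. intro E. apply (Hn t); auto. lra.
    + assert (x m <> 0) by (apply Hn; auto). lra.
Qed.

Lemma spacing a x dx Om s s' : 0 < Om -> hs a x dx -> 0 <= s < s' -> s' - s <= PI / Om ->
  x s = 0 -> x s' = 0 -> (forall r, s < r < s' -> x r <> 0) ->
  (forall t, 0 <= t -> a t <= Om ^ 2) ->
  (exists ts, s < ts < s' /\ a ts < Om ^ 2 /\ continuity_pt a ts) -> False.
Proof.
  intros HO H Hs HL Hx0 Hx1 Hn Ha Hts.
  destruct (sign_open x s s') as [P|P]; auto.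
  - intros t Ht. eapply hs_cont; eauto; lra.
  - eapply (spacing_pos a x dx Om s s'); eauto.
  - eapply (spacing_pos a (fun t => - x t) (fun t => - dx t) Om s s'); eauto.
    apply hs_neg; auto. rewrite Hx0; ring. rewrite Hx1; ring.
Qed.

Lemma interior_pos a x dx Om t0 : 0 < Om -> hs a x dx -> 0 <= t0 ->
  x t0 = 0 -> x (t0 + PI / Om) = 0 -> (forall r, t0 < r < t0 + PI / Om -> 0 < x r) ->
  (forall t, 0 <= t -> Om ^ 2 < a t) -> False.
Proof.
  intros HO H Ht0 Hx0 Hx1 Hp Ha.
  set (tau := PI / Om).
  assert (Etau : tau = PI / Om) by reflexivity.
  assert (Hx1' : x (t0 + tau) = 0) by exact Hx1.
  assert (Htau : 0 < tau) by (unfold tau; apply Rdiv_lt_0_compat; auto; apply PI_RGT_0).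
  set (W := fun t => dx t * sin (Om * (t - t0)) - x t * (Om * cos (Om * (t - t0)))).
  set (dW := fun t => (Om ^ 2 - a t) * x t * sin (Om * (t - t0))).
  assert (HdW : forall t, t0 <= t -> is_derive W t (dW t)).
  { intros t Ht. apply W_der; auto; lra. }
  assert (Hneg : forall t, t0 < t < t0 + tau -> dW t < 0).
  { intros t Ht. unfold dW.
    assert (0 < sin (Om * (t - t0))).
    { apply sin_gt_0. nra. assert (Om * (t - t0) < Om * tau) by (apply Rmult_lt_compat_l; lra).
      unfold tau in H0. replace (Om * (PI / Om)) with PI in H0 by (field; lra). lra. }
    assert (0 < x t) by (apply Hp; auto). assert (Om ^ 2 - a t < 0) by (generalize (Ha t ltac:(lra)); lra).
    assert (0 < x t * sin (Om * (t - t0))) by nra. nra. }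
  assert (Hnp : forall t, t0 <= t <= t0 + tau -> dW t <= 0).
  { intros t Ht. destruct (Req_dec t t0) as [->|]. unfold dW; rewrite Hx0; lra.
    destruct (Req_dec t (t0 + tau)) as [->|]. unfold dW; rewrite Hx1'; lra.
    apply Rlt_le, Hneg; lra. }
  assert (HW0 : W t0 = 0).
  { unfold W. rewrite Hx0. replace (t0 - t0) with 0 by ring. rewrite Rmult_0_r, sin_0. ring. }
  assert (HW1 : W (t0 + tau) = 0).
  { unfold W. cbv beta. rewrite Hx1'. replace (Om * (t0 + tau - t0)) with PI by (unfold tau; field; lra).
    rewrite sin_PI. ring. }
  assert (E1 : W (t0 + tau / 4) <= W t0).
  { apply (decr_le W dW); try lra. intros t Ht; apply HdW; lra. intros t Ht; apply Hnp; lra. }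
  assert (E2 : W (t0 + 3 * tau / 4) < W (t0 + tau / 4)).
  { apply (decr_lt W dW); try lra. intros t Ht; apply HdW; lra. intros t Ht; apply Hneg; lra. }
  assert (E3 : W (t0 + tau) <= W (t0 + 3 * tau / 4)).
  { apply (decr_le W dW); try lra. intros t Ht; apply HdW; lra. intros t Ht; apply Hnp; lra. }
  lra.
Qed.

Lemma interior a x dx Om t0 : 0 < Om -> hs a x dx -> 0 <= t0 ->
  x t0 = 0 -> x (t0 + PI / Om) = 0 -> (forall r, t0 < r < t0 + PI / Om -> x r <> 0) ->
  (forall t, 0 <= t -> Om ^ 2 < a t) -> False.
Proof.
  intros HO H Ht0 Hx0 Hx1 Hn Ha.
  destruct (sign_open x t0 (t0 + PI / Om)) as [P|P]; auto.
  - intros t Ht. eapply hs_cont; eauto; lra.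
  - eapply (interior_pos a x dx Om t0); eauto.
  - eapply (interior_pos a (fun t => - x t) (fun t => - dx t) Om t0); eauto.
    apply hs_neg; auto. rewrite Hx0; ring. rewrite Hx1; ring.
Qed.

Lemma osc_pos a x dx kap t0 : 0 < kap -> hs a x dx -> 0 <= t0 ->
  (forall t, 0 <= t -> kap ^ 2 <= a t) ->
  (forall r, t0 <= r <= t0 + PI / kap -> 0 < x r) -> False.
Proof.
  intros HO H Ht0 Ha Hp.
  set (tau := PI / kap).
  assert (Etau : tau = PI / kap) by reflexivity.
  assert (Htau : 0 < tau) by (unfold tau; apply Rdiv_lt_0_compat; auto; apply PI_RGT_0).
  set (W := fun t => dx t * sin (kap * (t - t0)) - x t * (kap * cos (kap * (t - t0)))).
  set (dW := fun t => (kap ^ 2 - a t) * x t * sin (kap * (t - t0))).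
  assert (HdW : forall t, t0 <= t -> is_derive W t (dW t)).
  { intros t Ht. apply W_der; auto; lra. }
  assert (Hnp : forall t, t0 <= t <= t0 + tau -> dW t <= 0).
  { intros t Ht. unfold dW.
    assert (0 <= sin (kap * (t - t0))).
    { apply sin_ge_0. nra. assert (kap * (t - t0) <= kap * tau) by (apply Rmult_le_compat_l; lra).
      unfold tau in H0. replace (kap * (PI / kap)) with PI in H0 by (field; lra). lra. }
    assert (0 < x t) by (apply Hp; auto). assert (kap ^ 2 - a t <= 0) by (generalize (Ha t ltac:(lra)); lra).
    assert (0 <= x t * sin (kap * (t - t0))) by nra. nra. }
  assert (HW0 : W t0 < 0).
  { unfold W. replace (t0 - t0) with 0 by ring. rewrite Rmult_0_r, sin_0, cos_0.
    assert (0 < x t0) by (apply Hp; lra). nra. }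
  assert (HW1 : 0 < W (t0 + tau)).
  { unfold W. cbv beta. replace (kap * (t0 + tau - t0)) with PI by (unfold tau; field; lra).
    rewrite sin_PI, cos_PI. assert (0 < x (t0 + tau)) by (apply Hp; lra). nra. }
  assert (E3 : W (t0 + tau) <= W t0).
  { apply (decr_le W dW); try lra. intros t Ht; apply HdW; lra. intros t Ht; apply Hnp; lra. }
  lra.
Qed.

Lemma osc a x dx kap t0 : 0 < kap -> hs a x dx -> 0 <= t0 ->
  (forall t, 0 <= t -> kap ^ 2 <= a t) ->
  exists r, t0 <= r <= t0 + PI / kap /\ x r = 0.
Proof.
  intros HO H Ht0 Ha.
  assert (Htau : 0 < PI / kap) by (apply Rdiv_lt_0_compat; auto; apply PI_RGT_0).
  destruct (classic (exists r, t0 <= r <= t0 + PI / kap /\ x r = 0)) as [E|E]; auto. exfalso.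
  assert (Hn : forall r, t0 <= r <= t0 + PI / kap -> x r <> 0).
  { intros r Hr E'. apply E. exists r; auto. }
  assert (Hcl : forall r, t0 <= r <= t0 + PI / kap ->
     forall t, Rmin r t0 <= t <= Rmax r t0 -> t0 <= t <= t0 + PI / kap).
  { intros r Hr t Ht. split.
    apply Rle_trans with (Rmin r t0); [apply Rmin_glb; lra| lra].
    apply Rle_trans with (Rmax r t0); [lra| apply Rmax_lub; lra]. }
  destruct (Rlt_dec 0 (x t0)) as [P|P].
  - apply (osc_pos a x dx kap t0); auto. intros r Hr. apply (sign_const x r t0); auto.
    intros t Ht. assert (Ht' := Hcl r Hr t Ht). split. eapply hs_cont; eauto; lra. apply Hn; auto.
  - assert (x t0 <> 0) by (apply Hn; lra).
    apply (osc_pos a (fun t => - x t) (fun t => - dx t) kap t0); auto. apply hs_neg; auto.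
    intros r Hr. apply (sign_const (fun t => - x t) r t0); auto.
    + intros t Ht. assert (Ht' := Hcl r Hr t Ht). split. apply continuity_pt_opp.
      eapply hs_cont; eauto; lra. intro E'. apply (Hn t); auto; lra.
    + lra.
Qed.

Lemma isolate a x dx B t0 : hs a x dx -> (forall t, 0 <= t -> Rabs (a t) <= B) -> 0 <= t0 ->
  x t0 = 0 -> (x 0 <> 0 \/ dx 0 <> 0) ->
  exists eta, 0 < eta /\ forall r, t0 < r < t0 + eta -> x r <> 0.
Proof.
  intros H HB Ht0 Hx Hnz.
  assert (Hd : dx t0 <> 0).
  { intro E. destruct (hs_uniq a x dx B H HB t0 Ht0 Hx E 0 (Rle_refl 0)). destruct Hnz; auto. }
  assert (Hc := hs_contd a x dx t0 H Ht0).
  destruct (Rlt_dec 0 (dx t0)) as [P|P].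
  - destruct (cont_pos dx t0 Hc P) as [eta [He Heta]]. exists eta. split; auto.
    intros r Hr. destruct (mvt x dx t0 r ltac:(lra)) as [c [Hc1 Hc2]].
    { intros t Ht. apply (H t ltac:(lra)). }
    assert (0 < dx c) by (apply Heta; apply Rabs_def1; lra).
    rewrite Hx in Hc2. intro E. rewrite E in Hc2. nra.
  - destruct (cont_neg dx t0 Hc ltac:(lra)) as [eta [He Heta]]. exists eta. split; auto.
    intros r Hr. destruct (mvt x dx t0 r ltac:(lra)) as [c [Hc1 Hc2]].
    { intros t Ht. apply (H t ltac:(lra)). }
    assert (dx c < 0) by (apply Heta; apply Rabs_def1; lra).
    rewrite Hx in Hc2. intro E. rewrite E in Hc2. nra.
Qed.

Definition noeig (a : R -> R) tau := forall v dv lam, hs a v dv ->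
     (forall t, 0 <= t -> v (t + tau) = lam * v t /\ dv (t + tau) = lam * dv t) ->
     v 0 = 0 /\ dv 0 = 0.

Lemma noeig0 a B om kap : 0 < om -> 0 < kap -> (forall t, 0 <= t -> Rabs (a t) <= B) ->
  (forall t, 0 <= t -> continuity_pt a t) ->
  (forall t, 0 <= t -> kap ^ 2 <= a t) -> (forall t, 0 <= t -> a t <= om ^ 2) ->
  (forall s s', 0 <= s < s' -> exists ts, s < ts < s' /\ a ts < om ^ 2) ->
  noeig a (PI / om).
Proof.
  intros Hom Hk HB Hc Hlo Hhi Hstr v dv lam Hv Heig.
  assert (Htau : 0 < PI / om) by (apply Rdiv_lt_0_compat; auto; apply PI_RGT_0).
  destruct (Req_dec (v 0) 0) as [E1|E1]; destruct (Req_dec (dv 0) 0) as [E2|E2]; auto; exfalso;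
  (assert (Hnz : v 0 <> 0 \/ dv 0 <> 0) by auto);
  (destruct (osc a v dv kap 0 Hk Hv (Rle_refl 0) Hlo) as [t0 [Ht0 Hz0]]);
  (assert (Hz1 : v (t0 + PI / om) = 0) by (rewrite (proj1 (Heig t0 ltac:(lra))), Hz0; ring));
  (destruct (isolate a v dv B t0 Hv HB ltac:(lra) Hz0 Hnz) as [eta Heta]);
  (destruct (first_zero v t0 (t0 + PI / om)) as [s' [Hs'1 [Hs'2 Hs'3]]];
    [lra| intros t Ht; eapply hs_cont; eauto; lra| auto| exists eta; auto|]);
  (destruct (Hstr t0 s' ltac:(lra)) as [ts [Hts1 Hts2]]);
  (apply (spacing a v dv om t0 s' Hom Hv); auto; try lra;
   exists ts; repeat split; auto; try lra; apply Hc; lra).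
Qed.

Lemma noeig1 a B om : 0 < om -> (forall t, 0 <= t -> Rabs (a t) <= B) ->
  (forall t, 0 <= t -> continuity_pt a t) ->
  (forall t, 0 <= t -> om ^ 2 < a t) -> (forall t, 0 <= t -> a t <= (2 * om) ^ 2) ->
  (forall s s', 0 <= s < s' -> exists ts, s < ts < s' /\ a ts < (2 * om) ^ 2) ->
  noeig a (PI / om).
Proof.
  intros Hom HB Hc Hlo Hhi Hstr v dv lam Hv Heig.
  assert (Htau : 0 < PI / om) by (apply Rdiv_lt_0_compat; auto; apply PI_RGT_0).
  assert (Hhalf : PI / (2 * om) = PI / om / 2) by (field; lra).
  assert (H2om : 0 < 2 * om) by lra.
  destruct (Req_dec (v 0) 0) as [E1|E1]; destruct (Req_dec (dv 0) 0) as [E2|E2]; auto; exfalso;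
  (assert (Hnz : v 0 <> 0 \/ dv 0 <> 0) by auto);
  (destruct (osc a v dv om 0 Hom Hv (Rle_refl 0) (fun t ht => Rlt_le _ _ (Hlo t ht))) as [t0 [Ht0 Hz0]]);
  (assert (Hz1 : v (t0 + PI / om) = 0) by (rewrite (proj1 (Heig t0 ltac:(lra))), Hz0; ring));
  (destruct (isolate a v dv B t0 Hv HB ltac:(lra) Hz0 Hnz) as [eta Heta]);
  (destruct (first_zero v t0 (t0 + PI / om)) as [s1 [Hs1 [Hs1z Hs1n]]];
    [lra| intros t Ht; eapply hs_cont; eauto; lra| auto| exists eta; auto|]);
  (destruct (Req_dec s1 (t0 + PI / om)) as [Eq|Neq];
   [apply (interior a v dv om t0 Hom Hv); auto; try lra; rewrite <- Eq; auto|]);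
  (assert (Hgap : PI / (2 * om) < s1 - t0);
   [destruct (Rlt_dec (PI / (2 * om)) (s1 - t0)) as [h|h]; auto; exfalso;
    destruct (Hstr t0 s1 ltac:(lra)) as [ts [Hts1 Hts2]];
    apply (spacing a v dv (2 * om) t0 s1 H2om Hv); auto; try lra;
    exists ts; repeat split; auto; try lra; apply Hc; lra|]);
  (destruct (isolate a v dv B s1 Hv HB ltac:(lra) Hs1z Hnz) as [eta2 Heta2]);
  (destruct (first_zero v s1 (t0 + PI / om)) as [s2 [Hs2 [Hs2z Hs2n]]];
    [lra| intros t Ht; eapply hs_cont; eauto; lra| auto| exists eta2; auto|]);
  (destruct (Hstr s1 s2 ltac:(lra)) as [ts [Hts1 Hts2]]);
  (apply (spacing a v dv (2 * om) s1 s2 H2om Hv); auto; try lra;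
   exists ts; repeat split; auto; try lra; apply Hc; lra).
Qed.

Lemma dext (f g : R -> R) (x l : R) : (forall t, f t = g t) -> is_derive f x l -> is_derive g x l.
Proof. intros H1 H2. exact (is_derive_ext f g x l H1 H2). Qed.

Definition V (c s : R) := c / 2 * s + 3 / 8 * s ^ 2.

Lemma energy_cons c al be y dy : duffing_sol c al be y dy ->
  forall t, dy t ^ 2 / 2 + c * y t ^ 2 / 2 + 3 / 8 * y t ^ 4 = be ^ 2 / 2 + c * al ^ 2 / 2 + 3 / 8 * al ^ 4.
Proof.
  intros [H0 [H1 H]] t.
  assert (Hc := const_der (fun t => dy t ^ 2 / 2 + c * y t ^ 2 / 2 + 3 / 8 * y t ^ 4)).
  assert (Hd : forall s, is_derive (fun t => dy t ^ 2 / 2 + c * y t ^ 2 / 2 + 3 / 8 * y t ^ 4) s 0).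
  2: { rewrite (Hc Hd t). cbv beta. rewrite H0, H1. reflexivity. }
  intros s. destruct (H s) as [A B].
  apply (dext (fun t => / 2 * dy t ^ 2 + c / 2 * y t ^ 2 + 3 / 8 * y t ^ 4)).
  { intros t'. unfold Rdiv. ring. }
  eapply is_derive_eq.
  apply (dplus (fun t => / 2 * dy t ^ 2 + c / 2 * y t ^ 2) (fun t => 3 / 8 * y t ^ 4)).
  apply (dplus (fun t => / 2 * dy t ^ 2) (fun t => c / 2 * y t ^ 2)).
  apply (dscal (fun t => dy t ^ 2)). apply dsq; eauto.
  apply (dscal (fun t => y t ^ 2)). apply dsq; eauto.
  apply (dscal (fun t => y t ^ 4)). apply (is_derive_pow y 4 s (dy s)); auto.
  simpl. field.
Qed.

Lemma sup_iff c al be y dy b : 0 < c -> 0 <= b -> duffing_sol c al be y dy ->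
  (sup_norm_le y b <-> be ^ 2 / 2 + c * al ^ 2 / 2 + 3 / 8 * al ^ 4 <= V c (b ^ 2)).
Proof.
  intros Hc Hb Hd. assert (HE := energy_cons c al be y dy Hd).
  destruct Hd as [H0 [H1 H]].
  set (E0 := be ^ 2 / 2 + c * al ^ 2 / 2 + 3 / 8 * al ^ 4) in *.
  split.
  - intros Hs. destruct (Rle_dec E0 (V c (b ^ 2))) as [h|h]; auto. exfalso.
    set (d := E0 - V c (b ^ 2)). assert (Hd : 0 < d) by (unfold d; lra).
    assert (Hdy : forall t, 2 * d <= dy t ^ 2).
    { intros t. generalize (HE t). generalize (Hs t). intros Ha He.
      assert (Hy2 : y t ^ 2 <= b ^ 2) by (rewrite <- (pow2_abs (y t)); apply pow_incr; split; auto; apply Rabs_pos).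
      unfold d, V. assert (0 <= y t ^ 2) by apply pow2_ge_0.
      assert (y t ^ 4 = (y t ^ 2) ^ 2) by ring. nra. }
    set (T := 1 + 2 * b ^ 2 / d).
    assert (HT : 1 <= T) by (unfold T; assert (0 <= 2 * b ^ 2 / d) by (apply Rdiv_le_0_compat; nra); lra).
    destruct (mvt y dy 0 T ltac:(lra)) as [cc [Hcc Hm]].
    { intros t _. apply (H t). }
    assert (E1 : (y T - y 0) ^ 2 >= 2 * d * T ^ 2).
    { rewrite Hm. assert (Hq := Hdy cc). assert (0 <= T ^ 2) by apply pow2_ge_0.
      replace ((dy cc * (T - 0)) ^ 2) with (dy cc ^ 2 * T ^ 2) by ring. nra. }
    assert (E2 : (y T - y 0) ^ 2 <= 4 * b ^ 2).
    { generalize (Hs T) (Hs 0). intros A1 A2. apply Rabs_le_between in A1. apply Rabs_le_between in A2. nra. }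
    assert (E3 : 2 * d * T = 2 * d + 4 * b ^ 2) by (unfold T; field; lra).
    nra.
  - intros Hle t. generalize (HE t). intros He.
    apply Rabs_le. destruct (Rle_dec (y t ^ 2) (b ^ 2)) as [h|h].
    + split; nra.
    + exfalso. assert (0 <= dy t ^ 2) by apply pow2_ge_0. unfold V in Hle.
      assert (y t ^ 4 = (y t ^ 2) ^ 2) by ring. nra.
Qed.

Lemma duffing_struct c al be y dy : 0 < c -> (al, be) <> (0, 0) -> duffing_sol c al be y dy ->
  exists S tau, 0 < S /\ 0 < tau /\
    V c S = be ^ 2 / 2 + c * al ^ 2 / 2 + 3 / 8 * al ^ 4 /\
    (forall t, y t ^ 2 <= S) /\
    (forall t, 0 <= t -> y (t + tau) = - y t) /\
    c + 3 / 4 * S <= (PI / tau) ^ 2 /\ (PI / tau) ^ 2 <= c + 3 / 2 * S /\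
    (forall s s', 0 <= s < s' -> exists ts, s < ts < s' /\ y ts ^ 2 < S).
Proof.
  intros Hc Hab Hd.
  assert (HE := energy_cons c al be y dy Hd).
  destruct Hd as [H0 [H1 H]].
  set (E0 := be ^ 2 / 2 + c * al ^ 2 / 2 + 3 / 8 * al ^ 4) in *.
  assert (HE0 : 0 < E0).
  { unfold E0. destruct (Req_dec al 0) as [->|Ha].
    - assert (be <> 0) by (intro Eb; apply Hab; rewrite Eb; reflexivity).
      assert (0 < be ^ 2) by (apply pow2_gt_0; auto). lra.
    - assert (0 < al ^ 2) by (apply pow2_gt_0; auto).
      assert (0 <= be ^ 2) by apply pow2_ge_0.
      assert (0 <= al ^ 4) by (replace (al ^ 4) with ((al ^ 2) ^ 2) by ring; apply pow2_ge_0).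
      nra. }
  set (D := sqrt (c ^ 2 / 4 + 3 / 2 * E0)).
  assert (HD2 : D ^ 2 = c ^ 2 / 4 + 3 / 2 * E0) by (unfold D; apply pow2_sqrt; nra).
  assert (HD0 : 0 <= D) by apply sqrt_pos.
  assert (HDc : c / 2 < D) by nra.
  set (S := 4 / 3 * (D - c / 2)).
  assert (HS : 0 < S) by (unfold S; lra).
  assert (HV : V c S = E0) by (unfold V, S; nra).
  assert (Hdy2 : forall t, dy t ^ 2 = (S - y t ^ 2) * (c + 3 / 4 * (S + y t ^ 2))).
  { intros t. generalize (HE t). unfold V in HV. intros Ht.
    replace ((S - y t ^ 2) * (c + 3 / 4 * (S + y t ^ 2))) with
      (c * S + 3 / 4 * S ^ 2 - c * y t ^ 2 - 3 / 4 * y t ^ 4) by ring. lra. }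
  assert (Hy2 : forall t, y t ^ 2 <= S).
  { intros t. generalize (Hdy2 t). assert (0 <= dy t ^ 2) by apply pow2_ge_0.
    assert (0 <= y t ^ 2) by apply pow2_ge_0. intros E. nra. }
  exists S.
  set (m := fun t => sqrt (c + 3 / 4 * (S + y t ^ 2))).
  assert (Hg : forall t, 0 < c + 3 / 4 * (S + y t ^ 2)) by (intros t; assert (0 <= y t ^ 2) by apply pow2_ge_0; lra).
  assert (Hm2 : forall t, m t ^ 2 = c + 3 / 4 * (S + y t ^ 2)) by (intros t; unfold m; apply pow2_sqrt; apply Rlt_le, Hg).
  assert (Hm0 : forall t, 0 < m t) by (intros t; unfold m; apply sqrt_lt_R0, Hg).
  assert (Hmder : forall t, is_derive m t (3 / 4 * y t * dy t / m t)).
  { intros t. destruct (H t) as [A B].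
    eapply is_derive_eq.
    apply (is_derive_sqrt (fun t => c + 3 / 4 * (S + y t ^ 2)) t (3 / 4 * (2 * y t * dy t))).
    2: apply Hg.
    eapply is_derive_eq. apply (dplus (fun _ => c) (fun t => 3 / 4 * (S + y t ^ 2))).
    apply (is_derive_const c t).
    apply (dscal (fun t => S + y t ^ 2)). apply (dplus (fun _ => S) (fun t => y t ^ 2)).
    apply (is_derive_const S t). apply dsq; eauto. simpl. unfold zero; simpl. ring.
    fold (m t). field. generalize (Hm0 t); lra. }
  set (Z := fun t => dy t / m t).
  assert (HZm : forall t, dy t = m t * Z t) by (intros t; unfold Z; field; generalize (Hm0 t); lra).
  assert (HZder : forall t, is_derive Z t (- (m t * y t))).
  { intros t. destruct (H t) as [A B]. assert (Hmt := Hm0 t).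
    eapply is_derive_eq. apply (is_derive_div dy m t _ _ B (Hmder t)). lra.
    apply (Rmult_eq_reg_l (m t ^ 4)). 2: apply pow_nonzero; lra.
    field_simplify; [|lra].
    replace (m t ^ 4) with ((m t ^ 2) ^ 2) by ring.
    replace (m t ^ 5) with ((m t ^ 2) ^ 2 * m t) by ring.
    replace (m t ^ 3) with (m t ^ 2 * m t) by ring.
    rewrite Hm2. rewrite Hdy2. field. }
  assert (HYZ : forall t, y t ^ 2 + Z t ^ 2 = S).
  { intros t. unfold Z. assert (Hmt := Hm0 t).
    replace ((dy t / m t) ^ 2) with (dy t ^ 2 / m t ^ 2) by (field; lra).
    rewrite Hdy2, Hm2. field. generalize (Hg t); lra. }
  assert (Hmc : forall t, continuous m t).
  { intros t. apply (ex_derive_continuous m t). eexists; apply Hmder. }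
  set (phi := fun t => RInt m 0 t).
  assert (Hphi : forall t, is_derive phi t (m t)).
  { intros t. apply (is_derive_RInt m phi 0 t).
    - apply filter_forall. intros b. unfold phi.
      apply (@RInt_correct R_CompleteNormedModule).
      apply (@ex_RInt_continuous R_CompleteNormedModule). intros z _. apply Hmc.
    - apply Hmc. }
  assert (Hphi0 : phi 0 = 0) by (unfold phi; exact (@RInt_point R_CompleteNormedModule 0 m)).
  set (A := sqrt S).
  assert (HA : 0 < A) by (unfold A; apply sqrt_lt_R0; auto).
  assert (HA2 : A ^ 2 = S) by (unfold A; apply pow2_sqrt; lra).
  set (Z0 := Z 0).
  assert (HYZ0 : al ^ 2 + Z0 ^ 2 = S) by (rewrite <- H0; apply HYZ).
  assert (HZA : -1 <= Z0 / A <= 1).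
  { assert ((Z0 / A) ^ 2 <= 1).
    { replace ((Z0 / A) ^ 2) with (Z0 ^ 2 / A ^ 2) by (field; lra). rewrite HA2.
      apply Rmult_le_reg_r with S; auto. unfold Rdiv; rewrite Rmult_assoc, Rinv_l, Rmult_1_r by lra. assert (0 <= al ^ 2) by apply pow2_ge_0. lra. }
    split; nra. }
  assert (Hsq : 1 - (Z0 / A) ^ 2 = (al / A) ^ 2).
  { replace ((Z0 / A) ^ 2) with (Z0 ^ 2 / A ^ 2) by (field; lra).
    replace ((al / A) ^ 2) with (al ^ 2 / A ^ 2) by (field; lra). rewrite HA2. replace (Z0 ^ 2) with (S - al ^ 2) by lra. field; lra. }
  assert (Hph0 : exists ph0, cos ph0 = Z0 / A /\ sin ph0 = al / A).
  { destruct (Rle_dec 0 al) as [Hal|Hal].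
    - exists (acos (Z0 / A)). split. apply cos_acos; auto.
      rewrite sin_acos by auto. unfold Rsqr. replace (1 - Z0 / A * (Z0 / A)) with ((al / A) ^ 2) by (rewrite <- Hsq; ring).
      apply sqrt_pow2. apply Rdiv_le_0_compat; lra.
    - exists (- acos (Z0 / A)). split. rewrite cos_neg. apply cos_acos; auto.
      rewrite sin_neg, sin_acos by auto. unfold Rsqr.
      replace (1 - Z0 / A * (Z0 / A)) with ((- al / A) ^ 2) by (rewrite <- (Ropp_involutive al) in Hsq |- *; field_simplify; field_simplify in Hsq; lra).
      rewrite sqrt_pow2. field; lra. apply Rdiv_le_0_compat; lra. }
  destruct Hph0 as [ph0 [Hc0 Hs0]].
  assert (Hrep : forall t, y t = A * sin (phi t + ph0) /\ Z t = A * cos (phi t + ph0)).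
  { set (DD := fun t => (y t - A * sin (phi t + ph0)) ^ 2 + (Z t - A * cos (phi t + ph0)) ^ 2).
    assert (HDD : forall t, is_derive DD t 0).
    { intros t. destruct (H t) as [Hy _].
      assert (Hs : is_derive (fun t => A * sin (phi t + ph0)) t (A * (cos (phi t + ph0) * m t))).
      { apply dscal. apply (der_comp sin (fun t => phi t + ph0)). apply is_derive_sin.
        eapply is_derive_eq. apply (dplus phi (fun _ => ph0)). apply Hphi. apply (is_derive_const ph0 t).
        simpl. unfold zero; simpl. ring. }
      assert (Hco : is_derive (fun t => A * cos (phi t + ph0)) t (A * (- sin (phi t + ph0) * m t))).
      { apply dscal. apply (der_comp cos (fun t => phi t + ph0)). apply is_derive_cos.
        eapply is_derive_eq. apply (dplus phi (fun _ => ph0)). apply Hphi. apply (is_derive_const ph0 t).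
        simpl. unfold zero; simpl. ring. }
      eapply is_derive_eq. unfold DD.
      apply (dplus (fun t => (y t - A * sin (phi t + ph0)) ^ 2) (fun t => (Z t - A * cos (phi t + ph0)) ^ 2)).
      apply (dsq (fun t => y t - A * sin (phi t + ph0))). apply (dminus y (fun t => A * sin (phi t + ph0))); eauto.
      apply (dsq (fun t => Z t - A * cos (phi t + ph0))). apply (dminus Z (fun t => A * cos (phi t + ph0))); eauto.
      rewrite (HZm t). ring. }
    intros t. assert (E := const_der DD HDD t).
    assert (E0' : DD 0 = 0).
    { unfold DD. rewrite Hphi0, Rplus_0_l, Hs0, Hc0, H0. fold Z0. field_simplify; lra. }
    rewrite E0' in E. unfold DD in E.
    assert (0 <= (y t - A * sin (phi t + ph0)) ^ 2) by apply pow2_ge_0.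
    assert (0 <= (Z t - A * cos (phi t + ph0)) ^ 2) by apply pow2_ge_0.
    split; nra. }
  set (k := sqrt (c + 3 / 4 * S)). set (K := sqrt (c + 3 / 2 * S)).
  assert (Hk0 : 0 < k) by (unfold k; apply sqrt_lt_R0; lra).
  assert (Hk2 : k ^ 2 = c + 3 / 4 * S) by (unfold k; apply pow2_sqrt; lra).
  assert (HK2 : K ^ 2 = c + 3 / 2 * S) by (unfold K; apply pow2_sqrt; lra).
  assert (HK0 : 0 < K) by (unfold K; apply sqrt_lt_R0; lra).
  assert (Hmk : forall t, k <= m t).
  { intros t. unfold k, m. apply sqrt_le_1_alt. assert (0 <= y t ^ 2) by apply pow2_ge_0. lra. }
  assert (HmK : forall t, m t <= K).
  { intros t. unfold K, m. apply sqrt_le_1_alt. generalize (Hy2 t). lra. }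
  assert (Hlb : forall t, 0 <= t -> k * t <= phi t).
  { intros t Ht. assert (E := incr_le (fun t => phi t - k * t) (fun t => m t - k) 0 t Ht).
    cbv beta in E. rewrite Hphi0 in E.
    assert (0 - k * 0 <= phi t - k * t); [|lra]. apply E.
    - intros s _. eapply is_derive_eq. apply (dminus phi (fun t => k * t)). apply Hphi.
      apply (dscal (fun t => t)). apply (is_derive_id s). simpl. unfold one; simpl. ring.
    - intros s _. generalize (Hmk s). lra. }
  assert (Hub : forall t, 0 <= t -> phi t <= K * t).
  { intros t Ht. assert (E := incr_le (fun t => K * t - phi t) (fun t => K - m t) 0 t Ht).
    cbv beta in E. rewrite Hphi0 in E.
    assert (K * 0 - 0 <= K * t - phi t); [|lra]. apply E.
    - intros s _. eapply is_derive_eq. apply (dminus (fun t => K * t) phi).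
      apply (dscal (fun t => t)). apply (is_derive_id s). apply Hphi. simpl. unfold one; simpl. ring.
    - intros s _. generalize (HmK s). lra. }
  assert (HPk : 0 < PI / k) by (apply Rdiv_lt_0_compat; auto; apply PI_RGT_0).
  destruct (ivt2 (fun t => phi t - PI) 0 (PI / k)) as [tau [Htau1 Htau2]].
  { lra. }
  { intros t _. apply continuity_pt_minus. eapply der_cont. apply Hphi. apply continuity_pt_const. intros u v; auto. }
  { rewrite Hphi0. assert (k * (PI / k) <= phi (PI / k)) by (apply Hlb; lra).
    replace (k * (PI / k)) with PI in H2 by (field; lra).
    assert (0 < PI) by apply PI_RGT_0. nra. }
  assert (Hpt : phi tau = PI) by lra.
  assert (Htau0 : 0 < tau).
  { destruct (Rle_lt_or_eq_dec 0 tau) as [h|h]; auto; try lra. subst tau. rewrite Hphi0 in Hpt.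
    generalize PI_RGT_0; lra. }
  exists tau. split; auto. split; auto.
  split. { rewrite HV. reflexivity. }
  split; auto.
  assert (Hyt : y tau = - al).
  { rewrite (proj1 (Hrep tau)), Hpt, Rplus_comm, neg_sin, Hs0. field; lra. }
  assert (HZt : Z tau = - Z0).
  { rewrite (proj2 (Hrep tau)), Hpt, Rplus_comm, neg_cos, Hc0. field; lra. }
  assert (Hmt : m tau = m 0).
  { unfold m. rewrite Hyt, H0. f_equal. ring. }
  assert (Hdyt : dy tau = - be).
  { rewrite HZm, Hmt, HZt, <- H1, (HZm 0). fold Z0. ring. }
  split.
  { set (e := fun t => y (t + tau) + y t). set (de := fun t => dy (t + tau) + dy t).
    set (f := fun t => e t ^ 2 + de t ^ 2).
    set (q := fun t => y (t + tau) ^ 2 - y (t + tau) * y t + y t ^ 2).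
    assert (Hfd : forall t, is_derive f t (2 * (1 - (c + 3 / 2 * q t)) * e t * de t)).
    { intros t. destruct (H t) as [A1 B1]. destruct (H (t + tau)) as [A2 B2].
      eapply is_derive_eq. unfold f.
      apply (dplus (fun t => e t ^ 2) (fun t => de t ^ 2)).
      apply (dsq e). unfold e. apply (dplus (fun t => y (t + tau)) y). apply dshift; eauto. eauto.
      apply (dsq de). unfold de. apply (dplus (fun t => dy (t + tau)) dy). apply dshift; eauto. eauto.
      unfold e, de, q. ring. }
    assert (Hq : forall t, Rabs (c + 3 / 2 * q t) <= c + 9 / 2 * S).
    { intros t. unfold q. assert (A1 := Hy2 t). assert (A2 := Hy2 (t + tau)).
      assert (0 <= (y (t + tau) - y t) ^ 2) by apply pow2_ge_0.
      assert (0 <= (y (t + tau) + y t) ^ 2) by apply pow2_ge_0.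
      apply Rabs_le. split; nra. }
    intros t Ht.
    assert (Hf0 : f 0 = 0).
    { unfold f, e, de. rewrite Rplus_0_l, Hyt, Hdyt, H0, H1. ring. }
    assert (Hft := gronwall_fwd f (fun t => 2 * (1 - (c + 3 / 2 * q t)) * e t * de t) (1 + (c + 9 / 2 * S)) 0 t Ht).
    rewrite Hf0, Rmult_0_l in Hft.
    assert (f t <= 0).
    { apply Hft. intros s _. apply Hfd.
      intros s _. generalize (nrg_bound_aux _ (e s) (de s) _ (Hq s)). intros Hb.
      apply Rabs_le_between in Hb. unfold f. lra. }
    unfold f in H2. assert (0 <= de t ^ 2) by apply pow2_ge_0.
    assert (e t ^ 2 = 0) by (assert (0 <= e t ^ 2) by apply pow2_ge_0; lra).
    replace (e t ^ 2) with (Rsqr (e t)) in H4 by (unfold Rsqr; ring). apply Rsqr_0_uniq in H4. unfold e in H4. lra. }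
  assert (HPt : 0 < PI / tau) by (apply Rdiv_lt_0_compat; auto; apply PI_RGT_0).
  assert (Hw1 : k <= PI / tau).
  { apply Rmult_le_reg_r with tau; auto. unfold Rdiv. rewrite Rmult_assoc, Rinv_l, Rmult_1_r by lra.
    assert (Ht1 : k * tau <= k * (PI / k)) by (apply Rmult_le_compat_l; lra).
    replace (k * (PI / k)) with PI in Ht1 by (field; lra). lra. }
  assert (Hw2 : PI / tau <= K).
  { apply Rmult_le_reg_r with tau; auto. unfold Rdiv. rewrite Rmult_assoc, Rinv_l, Rmult_1_r by lra.
    rewrite <- Hpt. apply Hub. lra. }
  split. { rewrite <- Hk2. apply pow_incr. lra. }
  split. { rewrite <- HK2. apply pow_incr. lra. }
  intros s s' Hss.
  destruct (classic (exists ts, s < ts < s' /\ y ts ^ 2 < S)) as [E|E]; auto. exfalso.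
  assert (Hz : forall r, s < r < s' -> dy r = 0).
  { intros r Hr. assert (y r ^ 2 = S).
    { destruct (Rlt_dec (y r ^ 2) S) as [h|h]. exfalso; apply E; exists r; auto. generalize (Hy2 r); lra. }
    assert (dy r ^ 2 = 0) by (rewrite Hdy2, H2; ring).
    replace (dy r ^ 2) with (Rsqr (dy r)) in H3 by (unfold Rsqr; ring). apply Rsqr_0_uniq in H3. auto. }
  set (s1 := s + (s' - s) / 3). set (s2 := s + 2 * (s' - s) / 3).
  destruct (mvt dy (fun t => - (c * y t + 3 / 2 * y t ^ 3)) s1 s2) as [xi [Hxi Hm]].
  { unfold s1, s2; lra. }
  { intros t _. apply (H t). }
  rewrite (Hz s1), (Hz s2) in Hm by (unfold s1, s2; lra).
  assert (Hxi2 : y xi ^ 2 = S).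
  { destruct (Rlt_dec (y xi ^ 2) S) as [h|h]. exfalso; apply E; exists xi; split; auto; unfold s1, s2 in *; lra.
    generalize (Hy2 xi); lra. }
  assert (Hne : s2 - s1 <> 0) by (unfold s1, s2; lra).
  assert (Hyx : y xi * (c + 3 / 2 * y xi ^ 2) = 0).
  { assert (- (c * y xi + 3 / 2 * y xi ^ 3) = 0).
    { apply (Rmult_eq_reg_r (s2 - s1)); auto. lra. }
    replace (y xi * (c + 3 / 2 * y xi ^ 2)) with (c * y xi + 3 / 2 * y xi ^ 3) by ring. lra. }
  apply Rmult_integral in Hyx. destruct Hyx as [Hy0|Hy0].
  - rewrite Hy0 in Hxi2. lra.
  - assert (0 <= y xi ^ 2) by apply pow2_ge_0. lra.
Qed.

Lemma stab_of a1 a2 K1 K2 : 0 < K1 -> 0 < K2 ->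
  (forall x dx, hs a1 x dx -> forall t, 0 <= t -> nrg x dx t <= K1 * nrg x dx 0) ->
  (forall x dx, hs a2 x dx -> forall t, 0 <= t -> nrg x dx t <= K2 * nrg x dx 0) ->
  lyapunov_stable_hill2 a1 a2.
Proof.
  intros HK1 HK2 B1 B2 eps Heps.
  set (d := eps / sqrt (K1 + K2)).
  assert (Hs : 0 < sqrt (K1 + K2)) by (apply sqrt_lt_R0; lra).
  assert (Hs2 : sqrt (K1 + K2) ^ 2 = K1 + K2) by (apply pow2_sqrt; lra).
  exists d. split. unfold d; apply Rdiv_lt_0_compat; auto.
  intros x1 dx1 x2 dx2 H1 H2 Hi t Ht.
  assert (h1 : hs a1 x1 dx1) by (intros s _; apply H1).
  assert (h2 : hs a2 x2 dx2) by (intros s _; apply H2).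
  assert (E1 := B1 x1 dx1 h1 t Ht). assert (E2 := B2 x2 dx2 h2 t Ht).
  unfold nrg in *.
  assert (Hd2 : d ^ 2 * (K1 + K2) = eps ^ 2).
  { unfold d. replace ((eps / sqrt (K1 + K2)) ^ 2) with (eps ^ 2 / sqrt (K1 + K2) ^ 2) by (field; lra). rewrite Hs2. field. lra. }
  assert (0 <= x1 0 ^ 2) by apply pow2_ge_0. assert (0 <= dx1 0 ^ 2) by apply pow2_ge_0.
  assert (0 <= x2 0 ^ 2) by apply pow2_ge_0. assert (0 <= dx2 0 ^ 2) by apply pow2_ge_0.
  assert (K1 * (x1 0 ^ 2 + dx1 0 ^ 2) + K2 * (x2 0 ^ 2 + dx2 0 ^ 2) <=
          (K1 + K2) * (x1 0 ^ 2 + dx1 0 ^ 2 + x2 0 ^ 2 + dx2 0 ^ 2)) by nra.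
  assert ((K1 + K2) * (x1 0 ^ 2 + dx1 0 ^ 2 + x2 0 ^ 2 + dx2 0 ^ 2) < (K1 + K2) * d ^ 2)
    by (apply Rmult_lt_compat_l; lra).
  nra.
Qed.

Lemma hill_ok y dy S tau p r : (forall t, is_derive y t (dy t)) -> 0 < tau -> 0 <= p -> 0 <= r ->
  (forall t, y t ^ 2 <= S) -> (forall t, 0 <= t -> y (t + tau) = - y t) ->
  noeig (fun t => p + r * y t ^ 2) tau ->
  exists K, 0 < K /\ forall x dx, hs (fun t => p + r * y t ^ 2) x dx -> forall t, 0 <= t -> nrg x dx t <= K * nrg x dx 0.
Proof.
  intros Hy Ht Hp Hr HS Hper Hne.
  apply (floquet _ (p + r * S) tau); auto.
  - intros t _. assert (0 <= y t ^ 2) by apply pow2_ge_0. generalize (HS t); intros.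
    apply Rabs_le. split; nra.
  - intros t Ht'. rewrite Hper by auto. f_equal. f_equal. ring.
Qed.

Lemma a_cont y dy p r : (forall t, is_derive y t (dy t)) ->
  forall t, 0 <= t -> continuity_pt (fun t => p + r * y t ^ 2) t.
Proof.
  intros Hy t _. eapply der_cont.
  eapply (dplus (fun _ => p) (fun t => r * y t ^ 2)). apply (is_derive_const p t).
  apply dscal. apply dsq. apply Hy.
Qed.

Lemma a_bound y S p r : 0 <= p -> 0 <= r -> (forall t, y t ^ 2 <= S) ->
  forall t, 0 <= t -> Rabs (p + r * y t ^ 2) <= p + r * S.
Proof.
  intros Hp Hr HS t _. assert (0 <= y t ^ 2) by apply pow2_ge_0. generalize (HS t); intros.
  apply Rabs_le. split; nra.
Qed.

Lemma V_mono c s1 s2 : 0 < c -> 0 <= s1 -> 0 <= s2 -> V c s1 <= V c s2 -> s1 <= s2.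
Proof. unfold V. intros. nra. Qed.

Theorem theorem5p1 :
  (forall (alpha beta : R) (y dy : R -> R),
     (alpha, beta) <> (0, 0) ->
     duffing_sol (INR 1 ^ 4 + 2) alpha beta y dy ->
     (sup_norm_le y (1 / sqrt 3) <-> energy 1 alpha beta <= 13 / 24) /\
     (sup_norm_le y (1 / sqrt 3) ->
        lyapunov_stable_hill2 (fun t => 7 + 27 / 2 * y t ^ 2)
                              (fun t => 10 + 9 * y t ^ 2))) /\
  (forall (alpha beta : R) (y dy : R -> R),
     (alpha, beta) <> (0, 0) ->
     duffing_sol (INR 2 ^ 4 + 2) alpha beta y dy ->
     (sup_norm_le y (sqrt (32 / 51)) <-> energy 2 alpha beta <= 5024 / 867) /\
     (sup_norm_le y (sqrt (32 / 51)) ->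
        lyapunov_stable_hill2 (fun t => 7 + 9 * y t ^ 2)
                              (fun t => 10 + 27 / 2 * y t ^ 2))).
Proof.
  assert (HPI := PI_RGT_0).
  split.
  - intros al be y dy Hab Hd.
    assert (Hc : INR 1 ^ 4 + 2 = 3) by (simpl; ring).
    rewrite Hc in Hd. unfold energy. rewrite Hc.
    assert (Hs3 : 0 < sqrt 3) by (apply sqrt_lt_R0; lra).
    assert (Hb2 : (1 / sqrt 3) ^ 2 = 1 / 3).
    { replace ((1 / sqrt 3) ^ 2) with (1 / (sqrt 3 ^ 2)) by (field; lra). rewrite pow2_sqrt; lra. }
    assert (Hiff := sup_iff 3 al be y dy (1 / sqrt 3) ltac:(lra) ltac:(apply Rlt_le, Rdiv_lt_0_compat; lra) Hd).
    assert (HVb : V 3 ((1 / sqrt 3) ^ 2) = 13 / 24) by (rewrite Hb2; unfold V; field).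
    rewrite HVb in Hiff.
    split; [exact Hiff|].
    intros Hsup. apply Hiff in Hsup.
    assert (Hdy : forall t, is_derive y t (dy t)) by (intros t; apply (proj2 (proj2 Hd) t)).
    destruct (duffing_struct 3 al be y dy ltac:(lra) Hab Hd)
      as [S [tau [HS [Htau [HVS [HyS [Hper [Hw1 [Hw2 Hstr]]]]]]]]].
    assert (HS3 : S <= 1 / 3).
    { apply (V_mono 3); try lra. rewrite HVS. unfold V. lra. }
    set (om := PI / tau) in *.
    assert (Hom : 0 < om) by (unfold om; apply Rdiv_lt_0_compat; lra).
    assert (Htom : PI / om = tau) by (unfold om; field; lra).
    assert (Hy0 : forall t, 0 <= y t ^ 2) by (intros; apply pow2_ge_0).
    destruct (hill_ok y dy S tau 7 (27 / 2)) as [K1 [HK1 B1]]; auto; try lra.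
    { rewrite <- Htom. apply (noeig1 _ (7 + 27 / 2 * S) om); auto.
      - apply a_bound; auto; lra.
      - eapply a_cont; eauto.
      - intros t _. generalize (Hy0 t). lra.
      - intros t _. generalize (HyS t). lra.
      - intros s s' Hs. destruct (Hstr s s' Hs) as [ts [Hts1 Hts2]]. exists ts. split; auto. lra. }
    destruct (hill_ok y dy S tau 10 9) as [K2 [HK2 B2]]; auto; try lra.
    { rewrite <- Htom. apply (noeig1 _ (10 + 9 * S) om); auto.
      - apply a_bound; auto; lra.
      - eapply a_cont; eauto.
      - intros t _. generalize (Hy0 t). lra.
      - intros t _. generalize (HyS t). lra.
      - intros s s' Hs. destruct (Hstr s s' Hs) as [ts [Hts1 Hts2]]. exists ts. split; auto. lra. }
    apply (stab_of _ _ K1 K2); auto.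
  - intros al be y dy Hab Hd.
    assert (Hc : INR 2 ^ 4 + 2 = 18) by (simpl; ring).
    rewrite Hc in Hd. unfold energy. rewrite Hc.
    assert (Hb2 : sqrt (32 / 51) ^ 2 = 32 / 51) by (apply pow2_sqrt; lra).
    assert (Hiff := sup_iff 18 al be y dy (sqrt (32 / 51)) ltac:(lra) (sqrt_pos _) Hd).
    assert (HVb : V 18 (sqrt (32 / 51) ^ 2) = 5024 / 867) by (rewrite Hb2; unfold V; field).
    rewrite HVb in Hiff.
    split; [exact Hiff|].
    intros Hsup. apply Hiff in Hsup.
    assert (Hdy : forall t, is_derive y t (dy t)) by (intros t; apply (proj2 (proj2 Hd) t)).
    destruct (duffing_struct 18 al be y dy ltac:(lra) Hab Hd)
      as [S [tau [HS [Htau [HVS [HyS [Hper [Hw1 [Hw2 Hstr]]]]]]]]].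
    assert (HS3 : S <= 32 / 51).
    { apply (V_mono 18); try lra. rewrite HVS. unfold V. lra. }
    set (om := PI / tau) in *.
    assert (Hom : 0 < om) by (unfold om; apply Rdiv_lt_0_compat; lra).
    assert (Htom : PI / om = tau) by (unfold om; field; lra).
    assert (Hy0 : forall t, 0 <= y t ^ 2) by (intros; apply pow2_ge_0).
    assert (Hk : 0 < sqrt 7) by (apply sqrt_lt_R0; lra).
    assert (Hk2 : sqrt 7 ^ 2 = 7) by (apply pow2_sqrt; lra).
    destruct (hill_ok y dy S tau 7 9) as [K1 [HK1 B1]]; auto; try lra.
    { rewrite <- Htom. apply (noeig0 _ (7 + 9 * S) om (sqrt 7)); auto.
      - apply a_bound; auto; lra.
      - eapply a_cont; eauto.
      - intros t _. generalize (Hy0 t). lra.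
      - intros t _. generalize (HyS t). lra.
      - intros s s' Hs. destruct (Hstr s s' Hs) as [ts [Hts1 Hts2]]. exists ts. split; auto. lra. }
    destruct (hill_ok y dy S tau 10 (27 / 2)) as [K2 [HK2 B2]]; auto; try lra.
    { rewrite <- Htom. apply (noeig0 _ (10 + 27 / 2 * S) om (sqrt 7)); auto.
      - apply a_bound; auto; lra.
      - eapply a_cont; eauto.
      - intros t _. generalize (Hy0 t). lra.
      - intros t _. generalize (HyS t). lra.
      - intros s s' Hs. destruct (Hstr s s' Hs) as [ts [Hts1 Hts2]]. exists ts. split; auto. lra. }
    apply (stab_of _ _ K1 K2); auto.
Qed.
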